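(* Let $n\ge2$ and let $\gamma:I\to\mathbb{R}^2$ be a $C^\infty$ curve with $0\in I$. Then $\gamma'(0)=\cdots=\gamma^{(n-1)}(0)=\mathbf{0}$ and $\det(\gamma^{(n)}(0),\gamma^{(n+1)}(0))\neq0$ if and only if $\gamma$ is $\mathcal{A}$-equivalent at $t=0$ to a curve $\gamma_0(t)=(t^n,t^{n+1})+h(t)$, where $h$ is an $\mathbb{R}^2$-valued $C^\infty$ function with $h(0)=h'(0)=\cdots=h^{(n+2)}(0)=\mathbf{0}$.
   Context: $\mathcal{A}$-equivalence of curve germs: existence of $C^\infty$ diffeomorphism germs $\psi$ of $(\mathbb{R},0)$ and $\Psi$ of $\mathbb{R}^2$ with $\Psi\circ\gamma_1\circ\psi^{-1}=\gamma_2$. *)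

(* Defs.v *)
From Stdlib Require Import Reals List.
From Coquelicot Require Import Coquelicot.
Open Scope R_scope.

Definition smooth1_at (x0 : R) (f : R -> R) : Prop :=
  locally x0 (fun x => forall n : nat, ex_derive (Derive_n f n) x).

Definition smooth_curve_at (x0 : R) (g : R -> R * R) : Prop :=
  smooth1_at x0 (fun t => fst (g t)) /\ smooth1_at x0 (fun t => snd (g t)).

Definition deriv_vec (g : R -> R * R) (k : nat) (t : R) : R * R :=
  (Derive_n (fun s => fst (g s)) k t, Derive_n (fun s => snd (g s)) k t).

Definition det2 (u v : R * R) : R := fst u * snd v - snd u * fst v.

Definition pD (b : bool) (f : R * R -> R) : R * R -> R :=
  fun p => if b then Derive (fun t => f (t, snd p)) (fst p)
           else Derive (fun t => f (fst p, t)) (snd p).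

Fixpoint iterD (w : list bool) (f : R * R -> R) : R * R -> R :=
  match w with nil => f | b :: w' => pD b (iterD w' f) end.

Definition has_partials (f : R * R -> R) (q : R * R) : Prop :=
  ex_derive (fun t => f (t, snd q)) (fst q) /\
  ex_derive (fun t => f (fst q, t)) (snd q).

Definition smooth2_at (p : R * R) (f : R * R -> R) : Prop :=
  locally p (fun q => forall w : list bool,
    continuous (iterD w f) q /\ has_partials (iterD w f) q).

Definition smooth_map2_at (p : R * R) (F : R * R -> R * R) : Prop :=
  smooth2_at p (fun q => fst (F q)) /\ smooth2_at p (fun q => snd (F q)).

Definition diffeo1_germ (x0 : R) (phi phi_inv : R -> R) : Prop :=
  smooth1_at x0 phi /\ smooth1_at (phi x0) phi_inv /\
  locally x0 (fun x => phi_inv (phi x) = x) /\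
  locally (phi x0) (fun y => phi (phi_inv y) = y).

Definition diffeo2_germ (p : R * R) (Psi Psi_inv : R * R -> R * R) : Prop :=
  smooth_map2_at p Psi /\ smooth_map2_at (Psi p) Psi_inv /\
  locally p (fun z => Psi_inv (Psi z) = z) /\
  locally (Psi p) (fun w => Psi (Psi_inv w) = w).

Definition A_equiv_at0 (g1 g2 : R -> R * R) : Prop :=
  exists (psi psi_inv : R -> R) (Psi Psi_inv : R * R -> R * R),
    diffeo1_germ 0 psi psi_inv /\ psi 0 = 0 /\
    diffeo2_germ (g1 0) Psi Psi_inv /\
    locally 0 (fun t => Psi (g1 (psi_inv t)) = g2 t).

(* Main.v *)
Require Import Defs.
From Stdlib Require Import Reals Lra Lia Psatz FunctionalExtensionality List Factorial.
From Coquelicot Require Import Coquelicot.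
Open Scope R_scope.


Lemma ballR (x e y : R) : ball x e y <-> Rabs (y - x) < e.
Proof. reflexivity. Qed.

Lemma locally_abs (x0 e : R) (P : R -> Prop) :
  0 < e -> (forall t, Rabs (t - x0) < e -> P t) -> locally x0 P.
Proof. intros He H. exists (mkposreal e He). intros y Hy. apply H. exact Hy. Qed.

Lemma locally_abs_inv (x0 : R) (P : R -> Prop) :
  locally x0 P -> exists e, 0 < e /\ forall t, Rabs (t - x0) < e -> P t.
Proof. intros [e He]. exists e. split. apply cond_pos. intros t Ht. apply He. exact Ht. Qed.

Definition openR (U : R -> Prop) := forall x, U x -> exists e, 0 < e /\ forall y, Rabs (y - x) < e -> U y.

Lemma openR_locally U x : openR U -> U x -> locally x U.
Proof. intros HU Hx. destruct (HU x Hx) as [e [He H]]. now apply locally_abs with e. Qed.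

Definition Ck (U : R -> Prop) (k : nat) (f : R -> R) :=
  forall x, U x -> forall j, (j < k)%nat -> ex_derive (Derive_n f j) x.

Lemma Derive_n_S (f : R -> R) j x : Derive_n f (S j) x = Derive_n (Derive f) j x.
Proof.
  rewrite (Derive_n_comp f j 1). now rewrite Nat.add_1_r.
Qed.

Lemma Ck_S U k f : Ck U (S k) f <-> (forall x, U x -> ex_derive f x) /\ Ck U k (Derive f).
Proof.
  split.
  - intros H. split.
    + intros x Hx. apply (H x Hx 0%nat). lia.
    + intros x Hx j Hj. apply ex_derive_ext with (Derive_n f (S j)).
      intros t; apply Derive_n_S. apply (H x Hx (S j)). lia.
  - intros [H1 H2] x Hx j Hj. destruct j as [|j]. now apply H1.
    apply ex_derive_ext with (Derive_n (Derive f) j).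
    intros t; symmetry; apply Derive_n_S. apply H2; auto; lia.
Qed.

Lemma Ck_ext U k f g : openR U -> (forall x, U x -> f x = g x) -> Ck U k f -> Ck U k g.
Proof.
  intros HU Hfg H x Hx j Hj.
  apply ex_derive_ext_loc with (Derive_n f j).
  - apply filter_imp with U. 2: now apply openR_locally.
    intros y Hy. apply Derive_n_ext_loc.
    apply filter_imp with U. 2: now apply openR_locally. auto.
  - now apply H.
Qed.

Lemma Ck_mono U k m f : (m <= k)%nat -> Ck U k f -> Ck U m f.
Proof. intros Hm H x Hx j Hj. apply H; auto; lia. Qed.

Lemma Ck_const U k c : Ck U k (fun _ => c).
Proof.
  intros x Hx j Hj. apply ex_derive_ext with (fun _ => match j with O => c | _ => 0 end).
  - intros t. destruct j. reflexivity. symmetry; apply Derive_n_const.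
  - apply ex_derive_const.
Qed.

Lemma Ck_id U k : Ck U k (fun x => x).
Proof.
  intros x Hx j Hj. destruct j as [|j]. apply ex_derive_id.
  apply ex_derive_ext with (fun _ => match j with O => 1 | _ => 0 end).
  - intros t. destruct j. simpl. rewrite Derive_id. reflexivity.
    rewrite Derive_n_S.
    rewrite (Derive_n_ext _ (fun _ => 1)). 2:{ intros; apply Derive_id. }
    symmetry; apply Derive_n_const.
  - apply ex_derive_const.
Qed.

Lemma Ck_ex_derive U k f x : Ck U (S k) f -> U x -> ex_derive f x.
Proof. intros H Hx. apply (H x Hx 0%nat). lia. Qed.

Lemma Ck_plus U k f g : openR U -> Ck U k f -> Ck U k g -> Ck U k (fun x => f x + g x).
Proof.
  intros HU. revert f g. induction k as [|k IH]; intros f g Hf Hg.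
  - intros x Hx j Hj; lia.
  - apply Ck_S in Hf as [Hf1 Hf2]. apply Ck_S in Hg as [Hg1 Hg2].
    apply Ck_S. split.
    + intros x Hx. apply (ex_derive_plus f g x); auto.
    + apply Ck_ext with (fun x => Derive f x + Derive g x); auto.
      intros x Hx. symmetry. apply Derive_plus; auto.
Qed.

Lemma Ck_mult U k f g : openR U -> Ck U k f -> Ck U k g -> Ck U k (fun x => f x * g x).
Proof.
  intros HU. revert f g. induction k as [|k IH]; intros f g Hf Hg.
  - intros x Hx j Hj; lia.
  - pose proof (Ck_mono _ _ k _ (Nat.le_succ_diag_r k) Hf) as Hf0.
    pose proof (Ck_mono _ _ k _ (Nat.le_succ_diag_r k) Hg) as Hg0.
    apply Ck_S in Hf as [Hf1 Hf2]. apply Ck_S in Hg as [Hg1 Hg2].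
    apply Ck_S. split.
    + intros x Hx. apply ex_derive_mult; auto.
    + apply Ck_ext with (fun x => Derive f x * g x + f x * Derive g x); auto.
      intros x Hx. symmetry. apply Derive_mult; auto.
      apply Ck_plus; auto.
Qed.

Lemma Ck_comp U V k f g : openR U -> Ck V k f -> Ck U k g -> (forall x, U x -> V (g x)) ->
  Ck U k (fun x => f (g x)).
Proof.
  intros HU. revert f g. induction k as [|k IH]; intros f g Hf Hg HUV.
  - intros x Hx j Hj; lia.
  - pose proof (Ck_mono _ _ k _ (Nat.le_succ_diag_r k) Hg) as Hg0.
    apply Ck_S in Hf as [Hf1 Hf2]. apply Ck_S in Hg as [Hg1 Hg2].
    apply Ck_S. split.
    + intros x Hx. apply ex_derive_comp; auto.
    + apply Ck_ext with (fun x => Derive g x * Derive f (g x)); auto.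
      intros x Hx. symmetry. apply Derive_comp; auto.
      apply Ck_mult; auto.
Qed.

Lemma Ck_scal U k c f : openR U -> Ck U k f -> Ck U k (fun x => c * f x).
Proof. intros HU H. apply Ck_mult; auto. apply Ck_const. Qed.

Lemma Ck_minus U k f g : openR U -> Ck U k f -> Ck U k g -> Ck U k (fun x => f x - g x).
Proof.
  intros HU Hf Hg. apply Ck_ext with (fun x => f x + (-1) * g x); auto.
  intros; ring. apply Ck_plus; auto. apply Ck_scal; auto.
Qed.

Lemma Ck_pow U k f m : openR U -> Ck U k f -> Ck U k (fun x => f x ^ m).
Proof.
  intros HU H. induction m as [|m IH].
  - simpl. apply Ck_const.
  - apply Ck_mult; auto.
Qed.

Lemma openR_nz : openR (fun x => x <> 0).
Proof.
  intros x Hx. exists (Rabs x). split. now apply Rabs_pos_lt.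
  intros y Hy Hy0. subst y. rewrite Rminus_0_l, Rabs_Ropp in Hy. lra.
Qed.

Lemma openR_pos : openR (fun x => 0 < x).
Proof.
  intros x Hx. exists x. split. auto.
  intros y Hy. apply Rabs_def2 in Hy. lra.
Qed.

Lemma Ck_inv k : Ck (fun x => x <> 0) k (fun x => / x).
Proof.
  induction k as [|k IH].
  - intros x Hx j Hj; lia.
  - apply Ck_S. split.
    + intros x Hx. apply ex_derive_Reals_1. apply derivable_pt_inv. auto. apply derivable_pt_id.
    + apply Ck_ext with (fun x => (-1) * ((/ x) * (/ x))). apply openR_nz.
      intros x Hx. rewrite (Derive_inv (fun x => x)); auto. rewrite Derive_id. field. auto.
      apply ex_derive_id.
      apply Ck_scal. apply openR_nz. apply Ck_mult; auto. apply openR_nz.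
Qed.

Lemma Ck_sqrt k : Ck (fun x => 0 < x) k sqrt.
Proof.
  induction k as [|k IH].
  - intros x Hx j Hj; lia.
  - apply Ck_S. split.
    + intros x Hx. eexists. apply (is_derive_sqrt (fun x => x) x 1). apply is_derive_Reals, derivable_pt_lim_id. auto.
    + apply Ck_ext with (fun x => (/2) * (/ (sqrt x))). apply openR_pos.
      intros x Hx. symmetry.
      replace (/2 * / sqrt x) with (1 / (2 * sqrt ((fun t => t) x))).
      apply is_derive_unique. apply (is_derive_sqrt (fun x => x) x 1). apply is_derive_Reals, derivable_pt_lim_id. auto.
      simpl. field. apply Rgt_not_eq, sqrt_lt_R0; auto.
      apply Ck_scal. apply openR_pos.
      apply Ck_comp with (fun x => x <> 0). apply openR_pos. apply Ck_inv. auto.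
      intros x Hx. apply Rgt_not_eq, sqrt_lt_R0; auto.
Qed.


Lemma pow_le_one (x : R) (n : nat) : 0 <= x -> x <= 1 -> x ^ n <= 1.
Proof. intros H0 H1. rewrite <- (pow1 n). apply pow_incr. lra. Qed.

Definition bigO (m : nat) (f : R -> R) :=
  exists C e, 0 <= C /\ 0 < e /\ forall t, Rabs t < e -> Rabs (f t) <= C * Rabs t ^ m.

Lemma bigO_ext_loc m f g : (exists e, 0 < e /\ forall t, Rabs t < e -> f t = g t) -> bigO m f -> bigO m g.
Proof.
  intros [e1 [He1 H1]] [C [e [HC [He H]]]]. exists C, (Rmin e e1). repeat split; auto.
  apply Rmin_pos; auto. intros t Ht. rewrite <- H1. apply H.
  eapply Rlt_le_trans; [apply Ht| apply Rmin_l]. eapply Rlt_le_trans; [apply Ht| apply Rmin_r].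
Qed.

Lemma bigO_ext m f g : (forall t, f t = g t) -> bigO m f -> bigO m g.
Proof. intros H. apply bigO_ext_loc. exists 1. split. lra. auto. Qed.

Lemma bigO_plus m f g : bigO m f -> bigO m g -> bigO m (fun t => f t + g t).
Proof.
  intros [C1 [e1 [HC1 [He1 H1]]]] [C2 [e2 [HC2 [He2 H2]]]].
  exists (C1 + C2), (Rmin e1 e2). repeat split. lra. apply Rmin_pos; auto.
  intros t Ht. assert (Ht1 : Rabs t < e1) by (eapply Rlt_le_trans; [apply Ht| apply Rmin_l]).
  assert (Ht2 : Rabs t < e2) by (eapply Rlt_le_trans; [apply Ht| apply Rmin_r]).
  eapply Rle_trans. apply Rabs_triang. specialize (H1 t Ht1). specialize (H2 t Ht2). lra.
Qed.

Lemma bigO_scal m c f : bigO m f -> bigO m (fun t => c * f t).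
Proof.
  intros [C [e [HC [He H]]]]. exists (Rabs c * C), e. repeat split; auto.
  apply Rmult_le_pos; auto. apply Rabs_pos.
  intros t Ht. rewrite Rabs_mult, Rmult_assoc. apply Rmult_le_compat_l. apply Rabs_pos. auto.
Qed.

Lemma bigO_minus m f g : bigO m f -> bigO m g -> bigO m (fun t => f t - g t).
Proof.
  intros Hf Hg. apply bigO_ext with (fun t => f t + (-1) * g t). intros; ring.
  apply bigO_plus; auto. apply bigO_scal; auto.
Qed.

Lemma bigO_mult m k f g : bigO m f -> bigO k g -> bigO (m + k) (fun t => f t * g t).
Proof.
  intros [C1 [e1 [HC1 [He1 H1]]]] [C2 [e2 [HC2 [He2 H2]]]].
  exists (C1 * C2), (Rmin e1 e2). repeat split. apply Rmult_le_pos; auto. apply Rmin_pos; auto.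
  intros t Ht. assert (Ht1 : Rabs t < e1) by (eapply Rlt_le_trans; [apply Ht| apply Rmin_l]).
  assert (Ht2 : Rabs t < e2) by (eapply Rlt_le_trans; [apply Ht| apply Rmin_r]).
  rewrite Rabs_mult, pow_add.
  replace (C1 * C2 * (Rabs t ^ m * Rabs t ^ k)) with ((C1 * Rabs t ^ m) * (C2 * Rabs t ^ k)) by ring.
  apply Rmult_le_compat; auto; apply Rabs_pos.
Qed.

Lemma bigO_pow m : bigO m (fun t => t ^ m).
Proof. exists 1, 1. repeat split; try lra. intros t _. rewrite RPow_abs. lra. Qed.

Lemma bigO_const c : bigO 0 (fun _ => c).
Proof. exists (Rabs c), 1. repeat split; try lra. apply Rabs_pos. intros; simpl; lra. Qed.

Lemma bigO_weaken m k f : (k <= m)%nat -> bigO m f -> bigO k f.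
Proof.
  intros Hkm [C [e [HC [He H]]]]. exists C, (Rmin e 1). repeat split; auto. apply Rmin_pos; lra.
  intros t Ht. assert (Ht1 : Rabs t < e) by (eapply Rlt_le_trans; [apply Ht| apply Rmin_l]).
  assert (Ht2 : Rabs t < 1) by (eapply Rlt_le_trans; [apply Ht| apply Rmin_r]).
  eapply Rle_trans. apply H; auto. apply Rmult_le_compat_l; auto.
  replace m with (k + (m - k))%nat by lia. rewrite pow_add.
  rewrite <- (Rmult_1_r (Rabs t ^ k)) at 2. apply Rmult_le_compat_l.
  apply pow_le, Rabs_pos. apply pow_le_one; auto. apply Rabs_pos. lra.
Qed.

Lemma bigO_comp m f g : bigO m f -> bigO 1 g -> bigO m (fun t => f (g t)).
Proof.
  intros [C1 [e1 [HC1 [He1 H1]]]] [K [e2 [HK [He2 H2]]]].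
  exists (C1 * K ^ m), (Rmin e2 (e1 / (K + 1))). repeat split.
  apply Rmult_le_pos; auto. apply pow_le; auto. apply Rmin_pos; auto. apply Rdiv_lt_0_compat; lra.
  intros t Ht. assert (Ht1 : Rabs t < e2) by (eapply Rlt_le_trans; [apply Ht| apply Rmin_l]).
  assert (Ht2 : Rabs t < e1 / (K + 1)) by (eapply Rlt_le_trans; [apply Ht| apply Rmin_r]).
  specialize (H2 t Ht1). rewrite pow_1 in H2.
  assert (Hg : Rabs (g t) < e1).
  { eapply Rle_lt_trans. apply H2. apply Rmult_lt_reg_r with (/(K+1)). apply Rinv_0_lt_compat; lra.
    apply Rle_lt_trans with (Rabs t). 2: exact Ht2.
    rewrite <- (Rmult_1_l (Rabs t)) at 2. rewrite Rmult_assoc, (Rmult_comm (Rabs t)), <- Rmult_assoc.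
    apply Rmult_le_compat_r. apply Rabs_pos.
    apply Rmult_le_reg_r with (K+1). lra. field_simplify; lra. }
  eapply Rle_trans. apply H1; auto. rewrite Rmult_assoc. apply Rmult_le_compat_l; auto.
  rewrite <- Rpow_mult_distr. apply pow_incr. split. apply Rabs_pos. lra.
Qed.

Lemma bigO_0_bounded f : (exists B e, 0 < e /\ forall t, Rabs t < e -> Rabs (f t) <= B) -> bigO 0 f.
Proof.
  intros [B [e [He H]]]. exists (Rabs B), e. repeat split; auto. apply Rabs_pos.
  intros t Ht. simpl. rewrite Rmult_1_r. eapply Rle_trans. apply H; auto. apply RRle_abs.
Qed.

Lemma bigO_at0 m f : (0 < m)%nat -> bigO m f -> f 0 = 0.
Proof.
  intros Hm [C [e [HC [He H]]]]. specialize (H 0). rewrite Rabs_R0, pow_i in H; auto.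
  rewrite Rmult_0_r in H. apply Rabs_eq_0. apply Rle_antisym. apply H; auto. apply Rabs_pos.
Qed.

Lemma small_zero (c K e : R) : 0 < e -> (forall t, 0 < t < e -> Rabs c <= K * t) -> c = 0.
Proof.
  intros He H. destruct (Req_dec c 0) as [|Hc]; auto. exfalso.
  assert (Hc' : 0 < Rabs c) by (apply Rabs_pos_lt; auto).
  assert (HK : 0 < K). { destruct (Rle_lt_dec K 0); auto. assert (Hq: 0 < e/2 < e) by lra. specialize (H (e/2) Hq). nra. }
  set (t := Rmin (e/2) (Rabs c / (2 * K))).
  assert (Ht : 0 < t). { apply Rmin_pos. lra. apply Rdiv_lt_0_compat; lra. }
  assert (Ht2 : t <= Rabs c / (2*K)) by apply Rmin_r.
  assert (Ht1 : t <= e/2) by apply Rmin_l.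
  assert (Hte : t < e) by lra. specialize (H t (conj Ht Hte)).
  assert (K * t <= Rabs c / 2). { apply Rle_trans with (K * (Rabs c / (2*K))). apply Rmult_le_compat_l; lra.
    right. field. lra. }
  lra.
Qed.

Lemma sum_shift (c : nat -> R) t m :
  sum_f_R0 (fun j => c j * t ^ j) (S m) = c 0%nat + t * sum_f_R0 (fun j => c (S j) * t ^ j) m.
Proof.
  induction m as [|m IH].
  - simpl. ring.
  - change (sum_f_R0 (fun j => c j * t ^ j) (S (S m))) with
      (sum_f_R0 (fun j => c j * t ^ j) (S m) + c (S (S m)) * t ^ (S (S m))).
    rewrite IH. simpl. ring.
Qed.

Lemma sum_bound (c : nat -> R) t m : Rabs t <= 1 ->
  Rabs (sum_f_R0 (fun j => c j * t ^ j) m) <= sum_f_R0 (fun j => Rabs (c j)) m.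
Proof.
  intros Ht. induction m as [|m IH].
  - simpl. rewrite Rmult_1_r. lra.
  - cbn [sum_f_R0]. eapply Rle_trans. apply Rabs_triang. apply Rplus_le_compat; auto.
    rewrite Rabs_mult. rewrite <- (Rmult_1_r (Rabs (c (S m)))) at 2.
    apply Rmult_le_compat_l. apply Rabs_pos. rewrite <- RPow_abs. apply pow_le_one; auto. apply Rabs_pos.
Qed.

Lemma poly_unique m : forall c : nat -> R,
  (exists C e, 0 < e /\ forall t, 0 < Rabs t < e -> Rabs (sum_f_R0 (fun j => c j * t ^ j) m) <= C * Rabs t ^ (S m)) ->
  forall j, (j <= m)%nat -> c j = 0.
Proof.
  induction m as [|m IH]; intros c [C [e [He H]]].
  - intros j Hj. assert (j = 0%nat) by lia. subst j.
    apply small_zero with C e; auto. intros t Ht.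
    assert (Htt: 0 < Rabs t < e) by (rewrite Rabs_pos_eq; lra). specialize (H t Htt).
    simpl in H. rewrite (Rabs_pos_eq t) in H by lra. rewrite !Rmult_1_r in H. exact H.
  - set (K := sum_f_R0 (fun j => Rabs (c (S j))) m).
    assert (Hc0 : c 0%nat = 0).
    { apply small_zero with (Rabs C + K) (Rmin e 1). apply Rmin_pos; lra.
      intros t Ht. assert (Hte : t < e) by (eapply Rlt_le_trans; [apply Ht | apply Rmin_l]).
      assert (Ht1 : t < 1) by (eapply Rlt_le_trans; [apply Ht | apply Rmin_r]).
      specialize (H t). rewrite sum_shift in H. rewrite Rabs_pos_eq in H by lra.
      assert (HQ := sum_bound (fun j => c (S j)) t m). rewrite Rabs_pos_eq in HQ by lra.
      specialize (HQ ltac:(lra)). fold K in HQ.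
      assert (Hp : t ^ S (S m) <= t). { assert (t ^ S m <= 1) by (apply pow_le_one; lra).
        change (t ^ S (S m)) with (t * t ^ S m). nra. }
      specialize (H ltac:(lra)).
      replace (c 0%nat) with ((c 0%nat + t * sum_f_R0 (fun j => c (S j) * t ^ j) m) - t * sum_f_R0 (fun j => c (S j) * t ^ j) m) by ring.
      eapply Rle_trans. apply Rabs_triang. rewrite Rabs_Ropp, Rabs_mult, (Rabs_pos_eq t) by lra.
      assert (C * t ^ S (S m) <= Rabs C * t). { apply Rle_trans with (Rabs C * t ^ S (S m)).
        apply Rmult_le_compat_r. apply pow_le; lra. apply RRle_abs. apply Rmult_le_compat_l; auto. apply Rabs_pos. }
      assert (t * Rabs (sum_f_R0 (fun j : nat => c (S j) * t ^ j) m) <= t * K) by (apply Rmult_le_compat_l; lra).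
      lra. }
    intros j Hj. destruct j as [|j]; auto.
    apply (IH (fun j => c (S j))); [| lia].
    exists C, e. split; auto. intros t Ht. specialize (H t Ht). rewrite sum_shift, Hc0, Rplus_0_l in H.
    rewrite Rabs_mult in H. apply Rmult_le_reg_l with (Rabs t). lra.
    replace (Rabs t * (C * Rabs t ^ S m)) with (C * Rabs t ^ S (S m)) by (simpl; ring). exact H.
Qed.

Lemma poly_unique_bigO m c : bigO (S m) (fun t => sum_f_R0 (fun j => c j * t ^ j) m) ->
  forall j, (j <= m)%nat -> c j = 0.
Proof.
  intros [C [e [HC [He H]]]]. apply poly_unique. exists C, e. split; auto. intros t Ht; apply H; lra.
Qed.


Lemma cont_bound (g : R -> R) x : continuous g x -> exists e B, 0 < e /\ forall t, Rabs (t - x) < e -> Rabs (g t) <= B.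
Proof.
  intros Hc. assert (H := Hc (ball (g x) 1) (locally_ball (g x) (mkposreal 1 Rlt_0_1))).
  apply locally_abs_inv in H. destruct H as [e [He H]]. exists e, (Rabs (g x) + 1). split; auto.
  intros t Ht. specialize (H t Ht). change (Rabs (g t - g x) < 1) in H.
  replace (g t) with (g x + (g t - g x)) by ring. eapply Rle_trans. apply Rabs_triang. lra.
Qed.

Lemma sum_at0 (a : nat -> R) m : sum_f_R0 (fun j => a j * 0 ^ j) m = a 0%nat.
Proof.
  induction m as [|m IH]. simpl; ring. cbn [sum_f_R0]. rewrite IH. simpl. ring.
Qed.

Lemma rem_bound0 x k d B : Rabs d <= B -> Rabs (x ^ k / INR (fact k) * d) <= Rabs x ^ k * B.
Proof.
  intros Hd. rewrite Rabs_mult. unfold Rdiv. rewrite Rabs_mult, RPow_abs.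
  assert (Hf : 1 <= INR (fact k)). { apply (le_INR 1). apply lt_O_fact. }
  rewrite Rabs_inv, (Rabs_pos_eq (INR _)) by lra.
  assert (0 < / INR (fact k) <= 1). { split. apply Rinv_0_lt_compat; lra.
    rewrite <- Rinv_1. apply Rinv_le_contravar; lra. }
  assert (0 <= Rabs (x ^ k)) by apply Rabs_pos. assert (0 <= Rabs d) by apply Rabs_pos.
  apply Rle_trans with (Rabs (x ^ k) * Rabs d). 2: apply Rmult_le_compat_l; auto.
  rewrite <- (Rmult_1_r (Rabs (x^k))) at 2. apply Rmult_le_compat_r; auto. nra.
Qed.

Lemma rem_bound x k d B : Rabs d <= B -> Rabs (x ^ k / INR (fact k) * d) <= B * Rabs x ^ k.
Proof. intros Hd. rewrite (Rmult_comm B). now apply rem_bound0. Qed.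

Lemma opp_pow_sq (t : R) j : (- t) ^ j * (-1) ^ j = t ^ j.
Proof. rewrite <- Rpow_mult_distr. replace (- t * -1) with t by ring. reflexivity. Qed.

Definition taylor (f : R -> R) (m : nat) (t : R) :=
  sum_f_R0 (fun j => (Derive_n f j 0 / INR (fact j)) * t ^ j) m.

Lemma taylor_bigO f m : smooth1_at 0 f -> bigO (S m) (fun t => f t - taylor f m t).
Proof.
  intros Hs. pose proof Hs as Hs'. apply locally_abs_inv in Hs as [e1 [He1 HP]].
  assert (Hc : continuous (Derive_n f (S m)) 0).
  { apply (ex_derive_continuous (Derive_n f (S m)) 0). apply (HP 0). rewrite Rminus_0_r, Rabs_R0; auto. }
  destruct (cont_bound _ _ Hc) as [e2 [B [He2 HB]]].
  assert (HB0 : 0 <= B). { specialize (HB 0). rewrite Rminus_0_r, Rabs_R0 in HB.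
    eapply Rle_trans. apply Rabs_pos. apply HB; auto. }
  exists B, (Rmin e1 e2). repeat split; auto. apply Rmin_pos; auto.
  intros t Ht. assert (Ht1 : Rabs t < e1) by (eapply Rlt_le_trans; [apply Ht| apply Rmin_l]).
  assert (Ht2 : Rabs t < e2) by (eapply Rlt_le_trans; [apply Ht| apply Rmin_r]).
  unfold taylor.
  destruct (Rtotal_order t 0) as [Hneg | [Hz | Hpos]].
  -
    set (g := fun s => f (- s)).
    assert (Hloc : forall s, Rabs s < e1 -> forall n, locally s (fun y => forall k, (k <= n)%nat -> ex_derive_n f k y)).
    { intros s Hs n. apply locally_abs with (e1 - Rabs s). lra. intros y Hy k Hk.
      destruct k. exact I. apply HP. rewrite Rminus_0_r.
      replace y with (s + (y - s)) by ring. eapply Rle_lt_trans. apply Rabs_triang. lra. }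
    destruct (Taylor_Lagrange g m 0 (-t)) as [z [Hz Heq]]. lra.
    { intros s Hs k Hk. apply ex_derive_n_comp_opp. apply Hloc.
      rewrite Rabs_Ropp, Rabs_pos_eq by lra. rewrite Rabs_left in Ht1 by lra. lra. }
    assert (Hg : g (- t) = f t) by (unfold g; now rewrite Ropp_involutive).
    rewrite Hg in Heq. rewrite Heq.
    assert (Hsum : sum_f_R0 (fun m0 : nat => (- t - 0) ^ m0 / INR (fact m0) * Derive_n g m0 0) m =
                   sum_f_R0 (fun j : nat => Derive_n f j 0 / INR (fact j) * t ^ j) m).
    { apply sum_eq. intros j Hj. unfold g. rewrite Derive_n_comp_opp.
      rewrite Ropp_0, Rminus_0_r. rewrite <- (opp_pow_sq t j). field. apply INR_fact_neq_0.
      apply Hloc. rewrite Ropp_0, Rabs_R0. auto. }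
    rewrite Hsum. replace (_ + _ - _) with ((- t - 0) ^ S m / INR (fact (S m)) * Derive_n g (S m) z) by ring.
    unfold g. rewrite Derive_n_comp_opp.
    2:{ apply Hloc. rewrite Rabs_Ropp, Rabs_pos_eq by lra. rewrite Rabs_left in Ht1 by lra. lra. }
    rewrite Rminus_0_r.
    replace ((- t) ^ S m / INR (fact (S m)) * ((-1) ^ S m * Derive_n f (S m) (- z)))
      with (t ^ S m / INR (fact (S m)) * Derive_n f (S m) (- z)).
    2:{ rewrite <- (opp_pow_sq t (S m)). field. apply INR_fact_neq_0. }
    apply rem_bound. apply HB. rewrite Rminus_0_r, Rabs_Ropp, Rabs_pos_eq by lra.
    rewrite Rabs_left in Ht2 by lra. lra.
  - subst t. rewrite sum_at0. simpl. rewrite Rdiv_1_r. rewrite Rminus_diag, Rabs_R0. lra.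
  - destruct (Taylor_Lagrange f m 0 t) as [z [Hz Heq]]. lra.
    { intros s Hs k Hk. destruct k. exact I. simpl. apply HP.
      rewrite Rminus_0_r, Rabs_pos_eq by lra. rewrite Rabs_pos_eq in Ht1 by lra. lra. }
    rewrite Heq.
    assert (Hsum : sum_f_R0 (fun m0 : nat => (t - 0) ^ m0 / INR (fact m0) * Derive_n f m0 0) m =
                   sum_f_R0 (fun j : nat => Derive_n f j 0 / INR (fact j) * t ^ j) m).
    { apply sum_eq. intros j Hj. rewrite Rminus_0_r. field. apply INR_fact_neq_0. }
    rewrite Hsum. replace (_ + _ - _) with ((t - 0) ^ S m / INR (fact (S m)) * Derive_n f (S m) z) by ring.
    rewrite Rminus_0_r. apply rem_bound. apply HB. rewrite Rminus_0_r, Rabs_pos_eq by lra.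
    rewrite Rabs_pos_eq in Ht2 by lra. lra.
Qed.


Lemma seg_mvt (f : R -> R) a b :
  (forall t, Rabs (t - a) <= Rabs (b - a) -> ex_derive f t) ->
  exists c, Rabs (c - a) <= Rabs (b - a) /\ f b - f a = Derive f c * (b - a).
Proof.
  intros Hd.
  assert (Hbet : forall t, Rmin a b <= t <= Rmax a b -> Rabs (t - a) <= Rabs (b - a)).
  { intros t Ht. unfold Rmin, Rmax in Ht. destruct (Rle_dec a b).
    rewrite !Rabs_pos_eq; lra. rewrite !Rabs_left1; lra. }
  destruct (MVT_gen f a b (Derive f)) as [c [Hc Heq]].
  - intros x Hx. apply Derive_correct. apply Hd, Hbet. lra.
  - intros x Hx. apply derivable_continuous_pt. apply ex_derive_Reals_0. apply Hd, Hbet. lra.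
  - exists c. split; auto.
Qed.

Lemma locally2_box (x0 y0 : R) (Q : R * R -> Prop) :
  locally (x0, y0) Q -> exists e, 0 < e /\ forall x y, Rabs (x - x0) < e -> Rabs (y - y0) < e -> Q (x, y).
Proof.
  intros [e He]. exists e. split. apply cond_pos. intros x y Hx Hy. apply He. split; assumption.
Qed.

Lemma box_locally2 (x0 y0 e : R) (Q : R * R -> Prop) :
  0 < e -> (forall x y, Rabs (x - x0) < e -> Rabs (y - y0) < e -> Q (x, y)) -> locally (x0, y0) Q.
Proof.
  intros He H. exists (mkposreal e He). intros [x y] [Hx Hy]. apply H; assumption.
Qed.

Lemma cont_bound2 (g : R * R -> R) x0 y0 : continuous g (x0, y0) ->
  exists e B, 0 < e /\ forall x y, Rabs (x - x0) < e -> Rabs (y - y0) < e -> Rabs (g (x, y)) <= B.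
Proof.
  intros Hc. assert (H := Hc (ball (g (x0,y0)) 1) (locally_ball (g (x0,y0)) (mkposreal 1 Rlt_0_1))).
  apply locally2_box in H. destruct H as [e [He H]]. exists e, (Rabs (g (x0,y0)) + 1). split; auto.
  intros x y Hx Hy. specialize (H x y Hx Hy). change (Rabs (g (x,y) - g (x0,y0)) < 1) in H.
  replace (g (x,y)) with (g (x0,y0) + (g (x,y) - g (x0,y0))) by ring.
  eapply Rle_trans. apply Rabs_triang. lra.
Qed.

Lemma lin2 (F : R * R -> R) x0 y0 : smooth2_at (x0, y0) F ->
  exists e C, 0 < e /\ 0 <= C /\ forall v1 v2, Rabs v1 < e -> Rabs v2 < e ->
    Rabs (F (x0 + v1, y0 + v2) - F (x0, y0) - pD true F (x0, y0) * v1 - pD false F (x0, y0) * v2)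
      <= C * (Rabs v1 + Rabs v2) ^ 2.
Proof.
  intros Hs. apply locally2_box in Hs. destruct Hs as [e0 [He0 HQ]].
  assert (HQ0 : forall w, continuous (iterD w F) (x0, y0)).
  { intros w. apply (HQ x0 y0); rewrite Rminus_diag, Rabs_R0; auto. }
  destruct (cont_bound2 _ _ _ (HQ0 (true :: true :: nil))) as [e1 [B1 [He1 HB1]]].
  destruct (cont_bound2 _ _ _ (HQ0 (false :: true :: nil))) as [e2 [B2 [He2 HB2]]].
  destruct (cont_bound2 _ _ _ (HQ0 (false :: false :: nil))) as [e3 [B3 [He3 HB3]]].
  set (B := Rmax (Rmax (Rabs B1) (Rabs B2)) (Rabs B3)).
  assert (HB1' : Rabs B1 <= B) by (unfold B; eapply Rle_trans; [apply Rmax_l|apply Rmax_l]).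
  assert (HB2' : Rabs B2 <= B) by (unfold B; eapply Rle_trans; [apply Rmax_r|apply Rmax_l]).
  assert (HB3' : Rabs B3 <= B) by (unfold B; apply Rmax_r).
  set (e := Rmin (Rmin e0 e1) (Rmin e2 e3)).
  assert (He : 0 < e) by (unfold e; repeat apply Rmin_pos; auto).
  assert (Hee0 : e <= e0) by (unfold e; eapply Rle_trans; [apply Rmin_l|apply Rmin_l]).
  assert (Hee1 : e <= e1) by (unfold e; eapply Rle_trans; [apply Rmin_l|apply Rmin_r]).
  assert (Hee2 : e <= e2) by (unfold e; eapply Rle_trans; [apply Rmin_r|apply Rmin_l]).
  assert (Hee3 : e <= e3) by (unfold e; eapply Rle_trans; [apply Rmin_r|apply Rmin_r]).
  exists e, (2 * B). repeat split; auto.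
  { assert (0 <= Rabs B3) by apply Rabs_pos. lra. }
  intros v1 v2 Hv1 Hv2.
  set (x := x0 + v1). set (y := y0 + v2).
  assert (Hbox : forall s u, Rabs (s - x0) <= Rabs v1 -> Rabs (u - y0) <= Rabs v2 ->
     Rabs (s - x0) < e /\ Rabs (u - y0) < e) by (intros; lra).
  assert (HP : forall s u w, Rabs (s - x0) <= Rabs v1 -> Rabs (u - y0) <= Rabs v2 ->
      has_partials (iterD w F) (s, u)).
  { intros s u w Hs Hu. destruct (Hbox s u Hs Hu). apply (HQ s u); lra. }
  destruct (seg_mvt (fun t => F (t, y)) x0 x) as [xi [Hxi Ha]].
  { intros t Ht. apply (HP t y nil). replace (x - x0) with v1 in Ht by (unfold x; ring). auto.
    unfold y. replace (y0 + v2 - y0) with v2 by ring. lra. }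
  destruct (seg_mvt (fun t => F (x0, t)) y0 y) as [eta [Heta Hb]].
  { intros t Ht. apply (HP x0 t nil). rewrite Rminus_diag, Rabs_R0. apply Rabs_pos.
    replace (y - y0) with v2 in Ht by (unfold y; ring). auto. }
  replace (x - x0) with v1 in * by (unfold x; ring).
  replace (y - y0) with v2 in * by (unfold y; ring).
  set (G1 := iterD (true :: nil) F). set (G2 := iterD (false :: nil) F).
  assert (HG1 : Derive (fun t => F (t, y)) xi = G1 (xi, y)) by reflexivity.
  assert (HG2 : Derive (fun t => F (x0, t)) eta = G2 (x0, eta)) by reflexivity.
  rewrite HG1 in Ha. rewrite HG2 in Hb.
  destruct (seg_mvt (fun t => G1 (t, y)) x0 xi) as [xi' [Hxi' Hc1]].
  { intros t Ht. apply (HP t y (true :: nil)). lra. unfold y. replace (y0 + v2 - y0) with v2 by ring. lra. }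
  destruct (seg_mvt (fun t => G1 (x0, t)) y0 y) as [eta' [Heta' Hc2]].
  { intros t Ht. apply (HP x0 t (true :: nil)). rewrite Rminus_diag, Rabs_R0. apply Rabs_pos.
    replace (y - y0) with v2 in Ht by (unfold y; ring). auto. }
  destruct (seg_mvt (fun t => G2 (x0, t)) y0 eta) as [eta'' [Heta'' Hd]].
  { intros t Ht. apply (HP x0 t (false :: nil)). rewrite Rminus_diag, Rabs_R0. apply Rabs_pos. lra. }
  replace (y - y0) with v2 in * by (unfold y; ring).
  assert (D1 : Derive (fun t => G1 (t, y)) xi' = iterD (true :: true :: nil) F (xi', y)) by reflexivity.
  assert (D2 : Derive (fun t => G1 (x0, t)) eta' = iterD (false :: true :: nil) F (x0, eta')) by reflexivity.
  assert (D3 : Derive (fun t => G2 (x0, t)) eta'' = iterD (false :: false :: nil) F (x0, eta'')) by reflexivity.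
  rewrite D1 in Hc1. rewrite D2 in Hc2. rewrite D3 in Hd.
  assert (b1 : Rabs (iterD (true :: true :: nil) F (xi', y)) <= B).
  { eapply Rle_trans. 2: apply HB1'. eapply Rle_trans. 2: apply RRle_abs. apply HB1. lra.
    unfold y. replace (y0 + v2 - y0) with v2 by ring. lra. }
  assert (b2 : Rabs (iterD (false :: true :: nil) F (x0, eta')) <= B).
  { eapply Rle_trans. 2: apply HB2'. eapply Rle_trans. 2: apply RRle_abs. apply HB2.
    rewrite Rminus_diag, Rabs_R0; lra. lra. }
  assert (b3 : Rabs (iterD (false :: false :: nil) F (x0, eta'')) <= B).
  { eapply Rle_trans. 2: apply HB3'. eapply Rle_trans. 2: apply RRle_abs. apply HB3.
    rewrite Rminus_diag, Rabs_R0; lra. lra. }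
  change (pD true F (x0, y0)) with (G1 (x0, y0)).
  change (pD false F (x0, y0)) with (G2 (x0, y0)).
  replace (F (x, y) - F (x0, y0) - G1 (x0, y0) * v1 - G2 (x0, y0) * v2) with
    ((F (x, y) - F (x0, y)) + (F (x0, y) - F (x0, y0)) - G1 (x0, y0) * v1 - G2 (x0, y0) * v2) by (unfold x, y; ring).
  cbv beta in Ha, Hb. rewrite Ha, Hb.
  replace (G1 (xi, y) * v1 + G2 (x0, eta) * v2 - G1 (x0, y0) * v1 - G2 (x0, eta) * v2 + G2 (x0,eta) * v2 - G2 (x0, y0) * v2)
    with (G1 (xi, y) * v1 + G2 (x0, eta) * v2 - G1 (x0, y0) * v1 - G2 (x0, y0) * v2) by ring.
  replace (G1 (xi, y) * v1 + G2 (x0, eta) * v2 - G1 (x0, y0) * v1 - G2 (x0, y0) * v2) with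
    (((G1 (xi, y) - G1 (x0, y)) + (G1 (x0, y) - G1 (x0, y0))) * v1 + (G2 (x0, eta) - G2 (x0, y0)) * v2) by ring.
  cbv beta in Hc1, Hc2, Hd. rewrite Hc1, Hc2, Hd.
  set (A1 := iterD (true :: true :: nil) F (xi', y)) in *.
  set (A2 := iterD (false :: true :: nil) F (x0, eta')) in *.
  set (A3 := iterD (false :: false :: nil) F (x0, eta'')) in *.
  assert (Hxi0 : Rabs (xi - x0) <= Rabs v1) by lra.
  assert (Heta0 : Rabs (eta - y0) <= Rabs v2) by lra.
  assert (P1 : Rabs (A1 * (xi - x0)) <= B * Rabs v1).
  { rewrite Rabs_mult. apply Rmult_le_compat; auto; apply Rabs_pos. }
  assert (P2 : Rabs (A2 * v2) <= B * Rabs v2).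
  { rewrite Rabs_mult. apply Rmult_le_compat; auto; try apply Rabs_pos. lra. }
  assert (P3 : Rabs (A3 * (eta - y0)) <= B * Rabs v2).
  { rewrite Rabs_mult. apply Rmult_le_compat; auto; apply Rabs_pos. }
  assert (T : Rabs (A1 * (xi - x0) + A2 * v2) <= B * (Rabs v1 + Rabs v2)).
  { eapply Rle_trans. apply Rabs_triang. lra. }
  eapply Rle_trans. apply Rabs_triang. rewrite (Rabs_mult (_ + _) v1), (Rabs_mult (A3 * _) v2).
  assert (0 <= Rabs v1) by apply Rabs_pos. assert (0 <= Rabs v2) by apply Rabs_pos.
  assert (0 <= B) by (eapply Rle_trans; [apply Rabs_pos|apply HB3']).
  assert (Q1 : Rabs (A1 * (xi - x0) + A2 * v2) * Rabs v1 <= B * (Rabs v1 + Rabs v2) * Rabs v1)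
    by (apply Rmult_le_compat_r; auto).
  assert (Q2 : Rabs (A3 * (eta - y0)) * Rabs v2 <= B * Rabs v2 * Rabs v2)
    by (apply Rmult_le_compat_r; auto).
  assert (B * (Rabs v1 + Rabs v2) * Rabs v1 + B * Rabs v2 * Rabs v2 <= 2 * B * (Rabs v1 + Rabs v2) ^ 2).
  { assert (0 <= B * (Rabs v1 * Rabs v1)) by (apply Rmult_le_pos; nra).
    assert (0 <= B * (Rabs v1 * Rabs v2)) by (apply Rmult_le_pos; nra).
    assert (0 <= B * (Rabs v2 * Rabs v2)) by (apply Rmult_le_pos; nra).
    simpl. nra. }
  lra.
Qed.


Lemma bigO_small m f e : (0 < m)%nat -> 0 < e -> bigO m f -> exists d, 0 < d /\ forall t, Rabs t < d -> Rabs (f t) < e.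
Proof.
  intros Hm He [C [e1 [HC [He1 H]]]].
  exists (Rmin (Rmin e1 1) (e / (C + 1))). split. repeat apply Rmin_pos; try lra. apply Rdiv_lt_0_compat; lra.
  intros t Ht. assert (Ht1 : Rabs t < e1) by (eapply Rlt_le_trans; [apply Ht| eapply Rle_trans; [apply Rmin_l|apply Rmin_l]]).
  assert (Ht2 : Rabs t < 1) by (eapply Rlt_le_trans; [apply Ht| eapply Rle_trans; [apply Rmin_l|apply Rmin_r]]).
  assert (Ht3 : Rabs t < e / (C + 1)) by (eapply Rlt_le_trans; [apply Ht| apply Rmin_r]).
  eapply Rle_lt_trans. apply H; auto.
  assert (Rabs t ^ m <= Rabs t). { destruct m. lia. change (Rabs t ^ S m) with (Rabs t * Rabs t ^ m). apply Rle_trans with (Rabs t * 1); [|lra].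
    apply Rmult_le_compat_l. apply Rabs_pos. apply pow_le_one. apply Rabs_pos. lra. }
  assert (Rabs t * (C + 1) < e). { apply Rmult_lt_reg_r with (/(C+1)). apply Rinv_0_lt_compat; lra.
    rewrite Rmult_assoc, Rinv_r by lra. rewrite Rmult_1_r. exact Ht3. }
  assert (0 <= Rabs t) by apply Rabs_pos. nra.
Qed.

Lemma lin2_bigO (G : R * R -> R) x0 y0 m d1 d2 : (0 < m)%nat -> smooth2_at (x0, y0) G ->
  bigO m d1 -> bigO m d2 ->
  bigO (m + m) (fun s => G (x0 + d1 s, y0 + d2 s) - G (x0, y0) - pD true G (x0, y0) * d1 s - pD false G (x0, y0) * d2 s).
Proof.
  intros Hm Hs H1 H2. destruct (lin2 G x0 y0 Hs) as [e [C [He [HC HL]]]].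
  destruct (bigO_small m d1 e Hm He H1) as [f1 [Hf1 S1]].
  destruct (bigO_small m d2 e Hm He H2) as [f2 [Hf2 S2]].
  assert (Hsum : bigO m (fun s => Rabs (d1 s) + Rabs (d2 s))).
  { apply bigO_plus.
    - destruct H1 as [C1 [e1 [A [B HH]]]]. exists C1, e1. repeat split; auto. intros t Ht. rewrite Rabs_Rabsolu. auto.
    - destruct H2 as [C1 [e1 [A [B HH]]]]. exists C1, e1. repeat split; auto. intros t Ht. rewrite Rabs_Rabsolu. auto. }
  assert (Hsq := bigO_mult m m _ _ Hsum Hsum).
  destruct Hsq as [C2 [e2 [HC2 [He2 HH]]]].
  exists (C * C2), (Rmin e2 (Rmin f1 f2)). repeat split. apply Rmult_le_pos; auto.
  repeat apply Rmin_pos; auto.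
  intros t Ht. assert (Ht1 : Rabs t < e2) by (eapply Rlt_le_trans; [apply Ht| apply Rmin_l]).
  assert (Ht2 : Rabs t < f1) by (eapply Rlt_le_trans; [apply Ht| eapply Rle_trans; [apply Rmin_r|apply Rmin_l]]).
  assert (Ht3 : Rabs t < f2) by (eapply Rlt_le_trans; [apply Ht| eapply Rle_trans; [apply Rmin_r|apply Rmin_r]]).
  eapply Rle_trans. apply HL; auto. specialize (HH t Ht1).
  rewrite Rabs_pos_eq in HH. 2: { apply Rmult_le_pos; apply Rplus_le_le_0_compat; apply Rabs_pos. }
  rewrite Rmult_assoc. apply Rmult_le_compat_l; auto. simpl. rewrite Rmult_1_r. exact HH.
Qed.

Lemma bigO_pow_mul m k f : bigO k f -> bigO (m + k) (fun t => t ^ m * f t).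
Proof. intros H. apply bigO_mult; auto. apply bigO_pow. Qed.

Lemma bigO_zero m : bigO m (fun _ => 0).
Proof. exists 0, 1. repeat split; try lra. intros; rewrite Rabs_R0. rewrite Rmult_0_l. lra. Qed.

Lemma bigO_id1 : bigO 1 (fun s => s).
Proof. apply bigO_ext with (fun s => s ^ 1). intros; ring. apply bigO_pow. Qed.

Lemma upow2 (u : R -> R) p : bigO 2 (fun s => u s - 1 - p * s) ->
  forall k, bigO 2 (fun s => u s ^ k - 1 - INR k * p * s).
Proof.
  intros Hu k. induction k as [|k IH].
  - apply bigO_ext with (fun _ => 0). intros; simpl; ring. apply bigO_zero.
  - assert (Hb : bigO 0 (fun s => u s ^ k)).
    { apply bigO_ext with (fun s => (u s ^ k - 1 - INR k * p * s) + 1 + INR k * p * s). intros; ring.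
      apply bigO_plus. apply bigO_plus. apply (bigO_weaken 2); auto; lia. apply bigO_const.
      apply bigO_scal. apply (bigO_weaken 1). lia. apply bigO_ext with (fun s => s ^ 1). intros; ring. apply bigO_pow. }
    apply bigO_ext with (fun s => INR k * p * p * s ^ 2 + (u s - 1 - p * s) * u s ^ k
        + (1 + p * s) * (u s ^ k - 1 - INR k * p * s)).
    { intros s. rewrite S_INR. simpl. ring. }
    apply bigO_plus. apply bigO_plus.
    + apply bigO_scal. apply bigO_pow.
    + replace 2%nat with (2 + 0)%nat by lia. apply bigO_mult; auto.
    + replace 2%nat with (0 + 2)%nat by lia. apply bigO_mult; auto.
      apply bigO_plus. apply bigO_const. apply bigO_scal. apply (bigO_weaken 1). lia.
      apply bigO_ext with (fun s => s ^ 1). intros; ring. apply bigO_pow.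
Qed.

Definition Qc (k : nat) (p q : R) := INR k * q + INR k * (INR k - 1) / 2 * p ^ 2.


Lemma upow3 (u : R -> R) p q : bigO 3 (fun s => u s - 1 - p * s - q * s ^ 2) ->
  forall k, bigO 3 (fun s => u s ^ k - 1 - INR k * p * s - Qc k p q * s ^ 2).
Proof.
  intros Hu k. induction k as [|k IH].
  - apply bigO_ext with (fun _ => 0). intros; unfold Qc; simpl; field. apply bigO_zero.
  - assert (Hb : bigO 0 (fun s => u s ^ k)).
    { apply bigO_ext with (fun s => (u s ^ k - 1 - INR k * p * s - Qc k p q * s ^ 2) + 1 + INR k * p * s + Qc k p q * s ^ 2). intros; ring.
      apply bigO_plus. apply bigO_plus. apply bigO_plus. apply (bigO_weaken 3); auto; lia. apply bigO_const.
      apply bigO_scal. apply (bigO_weaken 1). lia. apply bigO_id1.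
      apply bigO_scal. apply (bigO_weaken 2). lia. apply bigO_pow. }
    apply bigO_ext with (fun s => s ^ 3 * (p * Qc k p q + q * INR k * p + q * Qc k p q * s)
        + (u s - 1 - p * s - q * s ^ 2) * u s ^ k
        + (1 + p * s + q * s ^ 2) * (u s ^ k - 1 - INR k * p * s - Qc k p q * s ^ 2)).
    { intros s. unfold Qc. rewrite S_INR. simpl. field. }
    apply bigO_plus. apply bigO_plus.
    + replace 3%nat with (3 + 0)%nat by lia. apply bigO_pow_mul.
      apply bigO_plus. apply bigO_const. apply bigO_scal. apply (bigO_weaken 1). lia. apply bigO_id1.
    + replace 3%nat with (3 + 0)%nat by lia. apply bigO_mult; auto.
    + replace 3%nat with (0 + 3)%nat by lia. apply bigO_mult; auto.
      apply bigO_plus. apply bigO_plus. apply bigO_const. apply bigO_scal. apply (bigO_weaken 1). lia. apply bigO_id1.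
      apply bigO_scal. apply (bigO_weaken 2). lia. apply bigO_pow.
Qed.


Definition T4 (a0 A B C : R) (n j : nat) : R :=
  if Nat.eqb j 0 then a0 else if Nat.eqb j n then A else if Nat.eqb j (S n) then B
  else if Nat.eqb j (S (S n)) then C else 0.

Lemma sum_T4_low a0 A B C n s m : (1 <= n)%nat -> (m < n)%nat ->
  sum_f_R0 (fun j => T4 a0 A B C n j * s ^ j) m = a0.
Proof.
  intros Hn. induction m as [|m IH]; intros Hm.
  - simpl. unfold T4. simpl. ring.
  - cbn [sum_f_R0]. rewrite IH by lia. unfold T4.
    replace (Nat.eqb (S m) 0) with false by reflexivity.
    replace (Nat.eqb (S m) n) with false by (symmetry; apply Nat.eqb_neq; lia).
    replace (Nat.eqb (S m) (S n)) with false by (symmetry; apply Nat.eqb_neq; lia).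
    replace (Nat.eqb (S m) (S (S n))) with false by (symmetry; apply Nat.eqb_neq; lia). ring.
Qed.

Lemma T4_n a0 A B C n : (1 <= n)%nat -> T4 a0 A B C n n = A.
Proof. intros Hn. unfold T4. destruct n. lia. simpl. rewrite Nat.eqb_refl. reflexivity. Qed.
Lemma T4_Sn a0 A B C n : T4 a0 A B C n (S n) = B.
Proof. unfold T4. rewrite (proj2 (Nat.eqb_neq (S n) 0)) by lia. rewrite (proj2 (Nat.eqb_neq (S n) n)) by lia. rewrite Nat.eqb_refl. reflexivity. Qed.
Lemma T4_SSn a0 A B C n : T4 a0 A B C n (S (S n)) = C.
Proof. unfold T4. rewrite (proj2 (Nat.eqb_neq (S (S n)) 0)) by lia. rewrite (proj2 (Nat.eqb_neq (S (S n)) n)) by lia.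
  rewrite (proj2 (Nat.eqb_neq (S (S n)) (S n))) by lia. rewrite Nat.eqb_refl. reflexivity. Qed.
Lemma T4_mid a0 A B C n j : (1 <= j)%nat -> (j < n)%nat -> T4 a0 A B C n j = 0.
Proof. intros H1 H2. unfold T4.
  rewrite (proj2 (Nat.eqb_neq j 0)) by lia. rewrite (proj2 (Nat.eqb_neq j n)) by lia.
  rewrite (proj2 (Nat.eqb_neq j (S n))) by lia. rewrite (proj2 (Nat.eqb_neq j (S (S n)))) by lia. reflexivity. Qed.

Lemma sum_T4_1 a0 A B C n s : (1 <= n)%nat ->
  sum_f_R0 (fun j => T4 a0 A B C n j * s ^ j) (S n) = a0 + A * s ^ n + B * s ^ (S n).
Proof.
  intros Hn. cbn [sum_f_R0]. destruct n as [|n']. lia.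
  cbn [sum_f_R0]. rewrite sum_T4_low by lia. rewrite T4_Sn, T4_n by lia. ring.
Qed.

Lemma sum_T4_2 a0 A B C n s : (1 <= n)%nat ->
  sum_f_R0 (fun j => T4 a0 A B C n j * s ^ j) (S (S n)) = a0 + A * s ^ n + B * s ^ (S n) + C * s ^ (S (S n)).
Proof.
  intros Hn. change (sum_f_R0 (fun j => T4 a0 A B C n j * s ^ j) (S (S n))) with
   (sum_f_R0 (fun j => T4 a0 A B C n j * s ^ j) (S n) + T4 a0 A B C n (S (S n)) * s ^ (S (S n))).
  rewrite sum_T4_1 by auto. rewrite T4_SSn. ring.
Qed.

Lemma taylor_identify (f : R -> R) m (T : nat -> R) :
  smooth1_at 0 f ->
  bigO (S m) (fun s => f s - sum_f_R0 (fun j => T j * s ^ j) m) ->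
  forall j, (j <= m)%nat -> Derive_n f j 0 = INR (fact j) * T j.
Proof.
  intros Hs Hb j Hj.
  assert (Hp : bigO (S m) (fun s => sum_f_R0 (fun j => (Derive_n f j 0 / INR (fact j) - T j) * s ^ j) m)).
  { apply bigO_ext with (fun s => (f s - sum_f_R0 (fun j => T j * s ^ j) m) - (f s - taylor f m s)).
    intros s. unfold taylor.
    rewrite (tech11 (fun j => (Derive_n f j 0 / INR (fact j) - T j) * s ^ j)
                    (fun j => Derive_n f j 0 / INR (fact j) * s ^ j) (fun j => T j * s ^ j)).
    ring. intros; ring.
    apply bigO_minus; auto. apply taylor_bigO; auto. }
  assert (H := poly_unique_bigO m _ Hp j Hj). simpl in H.
  assert (Hf := INR_fact_neq_0 j).
  assert (E : Derive_n f j 0 = (Derive_n f j 0 / INR (fact j) - T j) * INR (fact j) + INR (fact j) * T j)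
    by (field; auto).
  rewrite E, H. ring.
Qed.

Lemma sum_zero_fun m (c : nat -> R) s : (forall j, (j <= m)%nat -> c j = 0) -> sum_f_R0 (fun j => c j * s ^ j) m = 0.
Proof.
  intros H. induction m as [|m IH]. simpl. rewrite H; auto. ring.
  cbn [sum_f_R0]. rewrite IH by auto. rewrite H; auto. ring.
Qed.

Lemma bigO_flat (f : R -> R) m : smooth1_at 0 f -> (forall j, (j <= m)%nat -> Derive_n f j 0 = 0) -> bigO (S m) f.
Proof.
  intros Hs H. apply bigO_ext with (fun s => f s - taylor f m s). intros s. unfold taylor.
  rewrite sum_zero_fun. ring. intros j Hj. rewrite H; auto. unfold Rdiv; ring.
  apply taylor_bigO; auto.
Qed.

Lemma bigO_div m f : bigO (S m) f -> bigO m (fun s => f s / s).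
Proof.
  intros [C [e [HC [He H]]]]. exists C, e. repeat split; auto. intros t Ht.
  destruct (Req_dec t 0) as [->|Ht0].
  - unfold Rdiv. rewrite Rinv_0, Rmult_0_r, Rabs_R0. apply Rmult_le_pos; auto. apply pow_le; lra.
  - specialize (H t Ht). unfold Rdiv. rewrite Rabs_mult, Rabs_inv.
    apply Rmult_le_reg_r with (Rabs t). apply Rabs_pos_lt; auto.
    rewrite Rmult_assoc, Rinv_l. 2: apply Rabs_no_R0; auto.
    replace (C * Rabs t ^ m * Rabs t) with (C * Rabs t ^ S m) by (simpl; ring). lra.
Qed.

Lemma loc0 (P : R -> Prop) : locally 0 P -> exists e, 0 < e /\ forall t, Rabs t < e -> P t.
Proof.
  intros H. apply locally_abs_inv in H. destruct H as [e [He H]]. exists e. split; auto.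
  intros t Ht. apply H. rewrite Rminus_0_r; auto.
Qed.

Lemma bigO_ext_locally m f g : locally 0 (fun t => f t = g t) -> bigO m f -> bigO m g.
Proof. intros H. apply bigO_ext_loc. now apply loc0. Qed.

Lemma cont_comp_loc (f : R -> R) x (P : R -> Prop) : ex_derive f x -> locally (f x) P -> locally x (fun s => P (f s)).
Proof. intros Hd HP. apply (ex_derive_continuous f x Hd). exact HP. Qed.

Lemma smooth_ex_derive (f : R -> R) x : smooth1_at x f -> ex_derive f x.
Proof. intros H. apply locally_singleton in H. apply (H 0%nat). Qed.

Lemma curve_cont_loc (gamma : R -> R * R) (Q : R * R -> Prop) : smooth_curve_at 0 gamma ->
  locally (gamma 0) Q -> locally 0 (fun s => Q (gamma s)).
Proof.
  intros [H1 H2] HQ. destruct (gamma 0) as [x0 y0] eqn:E.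
  apply locally2_box in HQ. destruct HQ as [e [He HQ]].
  assert (A1 := cont_comp_loc (fun s => fst (gamma s)) 0 (fun z => Rabs (z - x0) < e) (smooth_ex_derive _ _ H1)).
  assert (A2 := cont_comp_loc (fun s => snd (gamma s)) 0 (fun z => Rabs (z - y0) < e) (smooth_ex_derive _ _ H2)).
  cbv beta in A1, A2. rewrite E in A1, A2. simpl in A1, A2.
  assert (B1 : locally x0 (fun z => Rabs (z - x0) < e)) by (apply locally_abs with e; auto).
  assert (B2 : locally y0 (fun z => Rabs (z - y0) < e)) by (apply locally_abs with e; auto).
  specialize (A1 B1). specialize (A2 B2).
  generalize (filter_and _ _ A1 A2). apply filter_imp. intros s [S1 S2].
  destruct (gamma s) as [x y]. apply HQ; auto.
Qed.


Lemma lin_zero c : bigO 2 (fun s => c * s) -> c = 0.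
Proof.
  intros [C [e [HC [He H]]]]. apply small_zero with C e; auto. intros t Ht.
  assert (Ht' : Rabs t < e) by (rewrite Rabs_pos_eq; lra). specialize (H t Ht').
  rewrite Rabs_mult, (Rabs_pos_eq t) in H by lra.
  apply Rmult_le_reg_r with t. lra. simpl in H. nra.
Qed.

Lemma psi_deriv_nz (psi psi_inv : R -> R) : diffeo1_germ 0 psi psi_inv -> Derive psi 0 <> 0.
Proof.
  intros [Hs [Hsi [Hi1 Hi2]]].
  assert (D1 : Derive (fun x => psi_inv (psi x)) 0 = 1).
  { rewrite (Derive_ext_loc _ (fun x => x)). apply Derive_id. exact Hi1. }
  rewrite Derive_comp in D1. 2: apply smooth_ex_derive; auto. 2: apply smooth_ex_derive; auto.
  intros H. rewrite H in D1. lra.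
Qed.

Lemma psi_expand (psi psi_inv : R -> R) : diffeo1_germ 0 psi psi_inv -> psi 0 = 0 ->
  exists c p (u : R -> R), c <> 0 /\ (forall s, psi s = c * s * u s) /\ bigO 2 (fun s => u s - 1 - p * s).
Proof.
  intros Hd Hp0. pose proof (psi_deriv_nz _ _ Hd) as Hc. set (c := Derive psi 0) in *.
  destruct Hd as [Hs _].
  set (d := Derive_n psi 2 0 / INR (fact 2)).
  assert (HT := taylor_bigO psi 2 Hs).
  exists c, (d / c), (fun s => 1 + (psi s - c * s) / (c * s)). split; auto. split.
  - intros s. destruct (Req_dec s 0) as [->|Hs0]. rewrite Hp0. ring. field. auto.
  - apply bigO_ext with (fun s => (/ c) * ((psi s - taylor psi 2 s) / s)).
    + intros s. unfold taylor. cbn [sum_f_R0]. simpl Derive_n at 1. rewrite Hp0.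
      change (Derive_n psi 1 0) with c. fold d.
      destruct (Req_dec s 0) as [->|Hs0].
      * rewrite Hp0. unfold Rdiv. rewrite !Rmult_0_r, Rinv_0. ring.
      * simpl. unfold d. field; repeat split; try apply INR_fact_neq_0; auto.
    + apply bigO_scal. apply bigO_div. exact HT.
Qed.

Lemma bigO_bounded_of2 (u : R -> R) p : bigO 2 (fun s => u s - 1 - p * s) -> bigO 0 u.
Proof.
  intros H. apply bigO_ext with (fun s => (u s - 1 - p * s) + 1 + p * s). intros; ring.
  apply bigO_plus. apply bigO_plus. apply (bigO_weaken 2); auto; lia. apply bigO_const.
  apply bigO_scal. apply (bigO_weaken 1). lia. apply bigO_id1.
Qed.

Lemma jac_dir (Psi Psi_inv : R * R -> R * R) px py qx qy a b :
  smooth_map2_at (px, py) Psi -> smooth_map2_at (qx, qy) Psi_inv ->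
  Psi (px, py) = (qx, qy) -> Psi_inv (qx, qy) = (px, py) ->
  locally (qx, qy) (fun w => Psi (Psi_inv w) = w) ->
  let F1 := fun q => fst (Psi_inv q) in let F2 := fun q => snd (Psi_inv q) in
  let G1 := fun q => fst (Psi q) in let G2 := fun q => snd (Psi q) in
  let J11 := pD true F1 (qx, qy) in let J12 := pD false F1 (qx, qy) in
  let J21 := pD true F2 (qx, qy) in let J22 := pD false F2 (qx, qy) in
  let K11 := pD true G1 (px, py) in let K12 := pD false G1 (px, py) in
  let K21 := pD true G2 (px, py) in let K22 := pD false G2 (px, py) in
  K11 * (J11 * a + J12 * b) + K12 * (J21 * a + J22 * b) = a /\
  K21 * (J11 * a + J12 * b) + K22 * (J21 * a + J22 * b) = b.
Proof.
  intros [HP1 HP2] [HF1 HF2] Hpq Hqp Hloc F1 F2 G1 G2 J11 J12 J21 J22 K11 K12 K21 K22.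
  assert (Ha : bigO 1 (fun s => a * s)) by (apply bigO_scal, bigO_id1).
  assert (Hb : bigO 1 (fun s => b * s)) by (apply bigO_scal, bigO_id1).
  assert (L1 := lin2_bigO F1 qx qy 1 _ _ ltac:(lia) HF1 Ha Hb).
  assert (L2 := lin2_bigO F2 qx qy 1 _ _ ltac:(lia) HF2 Ha Hb).
  fold J11 J12 in L1. fold J21 J22 in L2.
  set (v1 := fun s => F1 (qx + a * s, qy + b * s) - px).
  set (v2 := fun s => F2 (qx + a * s, qy + b * s) - py).
  assert (Fq1 : F1 (qx, qy) = px) by (unfold F1; rewrite Hqp; reflexivity).
  assert (Fq2 : F2 (qx, qy) = py) by (unfold F2; rewrite Hqp; reflexivity).
  assert (V1 : bigO 2 (fun s => v1 s - (J11 * a + J12 * b) * s)).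
  { eapply bigO_ext. 2: exact L1. intros s. unfold v1. rewrite Fq1. simpl. ring. }
  assert (V2 : bigO 2 (fun s => v2 s - (J21 * a + J22 * b) * s)).
  { eapply bigO_ext. 2: exact L2. intros s. unfold v2. rewrite Fq2. simpl. ring. }
  assert (W1 : bigO 1 v1).
  { apply bigO_ext with (fun s => (v1 s - (J11 * a + J12 * b) * s) + (J11 * a + J12 * b) * s). intros; ring.
    apply bigO_plus. apply (bigO_weaken 2); auto. apply bigO_scal, bigO_id1. }
  assert (W2 : bigO 1 v2).
  { apply bigO_ext with (fun s => (v2 s - (J21 * a + J22 * b) * s) + (J21 * a + J22 * b) * s). intros; ring.
    apply bigO_plus. apply (bigO_weaken 2); auto. apply bigO_scal, bigO_id1. }
  assert (M1 := lin2_bigO G1 px py 1 _ _ ltac:(lia) HP1 W1 W2).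
  assert (M2 := lin2_bigO G2 px py 1 _ _ ltac:(lia) HP2 W1 W2).
  fold K11 K12 in M1. fold K21 K22 in M2.
  assert (Hl : locally 0 (fun s => Psi (Psi_inv (qx + a * s, qy + b * s)) = (qx + a * s, qy + b * s))).
  { apply locally2_box in Hloc. destruct Hloc as [e [He Hl]].
    apply locally_abs with (e / (Rabs a + Rabs b + 1)). apply Rdiv_lt_0_compat; auto.
    assert (0 <= Rabs a) by apply Rabs_pos. assert (0 <= Rabs b) by apply Rabs_pos. lra.
    intros t Ht. rewrite Rminus_0_r in Ht. assert (0 <= Rabs a) by apply Rabs_pos. assert (0 <= Rabs b) by apply Rabs_pos.
    assert (Ht' : Rabs t * (Rabs a + Rabs b + 1) < e).
    { apply Rmult_lt_reg_r with (/ (Rabs a + Rabs b + 1)). apply Rinv_0_lt_compat; lra.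
      rewrite Rmult_assoc, Rinv_r by lra. lra. }
    assert (0 <= Rabs t) by apply Rabs_pos.
    apply Hl. replace (qx + a * t - qx) with (a * t) by ring. rewrite Rabs_mult. nra.
    replace (qy + b * t - qy) with (b * t) by ring. rewrite Rabs_mult. nra. }
  assert (Gp1 : G1 (px, py) = qx) by (unfold G1; rewrite Hpq; reflexivity).
  assert (Gp2 : G2 (px, py) = qy) by (unfold G2; rewrite Hpq; reflexivity).
  split.
  - assert (Z : (a - (K11 * (J11 * a + J12 * b) + K12 * (J21 * a + J22 * b))) = 0); [|lra].
    apply lin_zero.
    apply bigO_ext_locally with (fun s => (G1 (px + v1 s, py + v2 s) - G1 (px, py) - K11 * v1 s - K12 * v2 s)
         + K11 * (v1 s - (J11 * a + J12 * b) * s) + K12 * (v2 s - (J21 * a + J22 * b) * s)).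
    + eapply filter_imp. 2: exact Hl. intros s Hs. unfold v1, v2.
      replace (px + (F1 (qx + a * s, qy + b * s) - px)) with (F1 (qx + a * s, qy + b * s)) by ring.
      replace (py + (F2 (qx + a * s, qy + b * s) - py)) with (F2 (qx + a * s, qy + b * s)) by ring.
      rewrite Gp1. unfold G1, F1, F2. rewrite <- surjective_pairing. rewrite Hs. simpl. ring.
    + apply bigO_plus. apply bigO_plus. exact M1.
      apply bigO_scal; auto. apply bigO_scal; auto.
  - assert (Z : (b - (K21 * (J11 * a + J12 * b) + K22 * (J21 * a + J22 * b))) = 0); [|lra].
    apply lin_zero.
    apply bigO_ext_locally with (fun s => (G2 (px + v1 s, py + v2 s) - G2 (px, py) - K21 * v1 s - K22 * v2 s)
         + K21 * (v1 s - (J11 * a + J12 * b) * s) + K22 * (v2 s - (J21 * a + J22 * b) * s)).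
    + eapply filter_imp. 2: exact Hl. intros s Hs. unfold v1, v2.
      replace (px + (F1 (qx + a * s, qy + b * s) - px)) with (F1 (qx + a * s, qy + b * s)) by ring.
      replace (py + (F2 (qx + a * s, qy + b * s) - py)) with (F2 (qx + a * s, qy + b * s)) by ring.
      rewrite Gp2. unfold G2, F1, F2. rewrite <- surjective_pairing. rewrite Hs. simpl. ring.
    + apply bigO_plus. apply bigO_plus. exact M2.
      apply bigO_scal; auto. apply bigO_scal; auto.
Qed.


Lemma pow_le2 (u : R -> R) p k : bigO 2 (fun s => u s - 1 - p * s) -> bigO 1 (fun s => u s ^ k - 1).
Proof.
  intros H. apply bigO_ext with (fun s => (u s ^ k - 1 - INR k * p * s) + (INR k * p) * s). intros; ring.
  apply bigO_plus. apply (bigO_weaken 2 1). lia. exact (upow2 u p H k). apply bigO_scal, bigO_id1.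
Qed.

Lemma backward (n : nat) (gamma h : R -> R * R) :
  (2 <= n)%nat -> smooth_curve_at 0 gamma -> smooth_curve_at 0 h ->
  (forall k, (k <= n + 2)%nat -> deriv_vec h k 0 = (0,0)) ->
  A_equiv_at0 gamma (fun t => (t ^ n + fst (h t), t ^ (S n) + snd (h t))) ->
  (forall k, (1 <= k <= n - 1)%nat -> deriv_vec gamma k 0 = (0, 0)) /\
  det2 (deriv_vec gamma n 0) (deriv_vec gamma (S n) 0) <> 0.
Proof.
  intros Hn Hg Hh Hhd [psi [psi_inv [Psi [Psi_inv [Hd1 [Hp0 [Hd2 Hloc]]]]]]].
  pose proof Hd1 as Hd1'. destruct Hd1' as [Hps [Hpis [Hi1 Hi2]]].
  destruct Hd2 as [HPs [HPis [HI1 HI2]]].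
  assert (Hpi0 : psi_inv 0 = 0).
  { pose proof (locally_singleton _ _ Hi1) as H. simpl in H. rewrite Hp0 in H. exact H. }
  assert (Hh0 : fst (h 0) = 0 /\ snd (h 0) = 0).
  { specialize (Hhd 0%nat ltac:(lia)). unfold deriv_vec in Hhd. simpl in Hhd. injection Hhd. auto. }
  assert (HPg : Psi (gamma 0) = (0, 0)).
  { pose proof (locally_singleton _ _ Hloc) as H. simpl in H. rewrite Hpi0 in H. rewrite H.
    destruct Hh0 as [E1 E2]. rewrite E1, E2. rewrite pow_i by lia. f_equal; ring. }
  assert (HPig : Psi_inv (0, 0) = gamma 0).
  { pose proof (locally_singleton _ _ HI1) as H. simpl in H. rewrite HPg in H. exact H. }
  set (gx := fst (gamma 0)). set (gy := snd (gamma 0)).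
  assert (Eg : gamma 0 = (gx, gy)) by apply surjective_pairing.
  destruct (psi_expand psi psi_inv Hd1 Hp0) as [c [p [u [Hc [Hpsi Hu]]]]].
  assert (Hub : bigO 0 u) by (eapply bigO_bounded_of2; eauto).
  assert (HpsiO : bigO 1 psi).
  { apply bigO_ext with (fun s => (c * s) * u s). intros; rewrite Hpsi; ring.
    replace 1%nat with (1 + 0)%nat by lia. apply bigO_mult; auto. apply bigO_scal, bigO_id1. }
  destruct Hh as [Hh1 Hh2]. destruct Hg as [Hg1 Hg2].
  assert (Hf1 : bigO (S (S n)) (fun s => fst (h s))).
  { apply bigO_flat; auto. intros j Hj. specialize (Hhd j ltac:(lia)). unfold deriv_vec in Hhd.
    injection Hhd. auto. }
  assert (Hf2 : bigO (S (S n)) (fun s => snd (h s))).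
  { apply bigO_flat; auto. intros j Hj. specialize (Hhd j ltac:(lia)). unfold deriv_vec in Hhd.
    injection Hhd. auto. }
  set (d1 := fun s => psi s ^ n + fst (h (psi s))).
  set (d2 := fun s => psi s ^ S n + snd (h (psi s))).
  assert (E1 : bigO (S (S n)) (fun s => d1 s - c ^ n * s ^ n - c ^ n * INR n * p * s ^ S n)).
  { apply bigO_ext with (fun s => c ^ n * (s ^ n * (u s ^ n - 1 - INR n * p * s)) + fst (h (psi s))).
    intros s. unfold d1. rewrite Hpsi. rewrite !Rpow_mult_distr. simpl. ring.
    apply bigO_plus. apply bigO_scal. replace (S (S n)) with (n + 2)%nat by lia. apply bigO_pow_mul.
    apply upow2; auto. apply (bigO_comp _ (fun t => fst (h t)) psi); auto. }
  assert (E2 : bigO (S (S n)) (fun s => d2 s - c ^ S n * s ^ S n)).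
  { apply bigO_ext with (fun s => c ^ S n * (s ^ S n * (u s ^ S n - 1)) + snd (h (psi s))).
    intros s. unfold d2. rewrite Hpsi. rewrite !Rpow_mult_distr. ring.
    apply bigO_plus. apply bigO_scal. replace (S (S n)) with (S n + 1)%nat by lia. apply bigO_pow_mul.
    eapply pow_le2; eauto. apply (bigO_comp _ (fun t => snd (h t)) psi); auto. }
  assert (D1O : bigO n d1).
  { apply bigO_ext with (fun s => (d1 s - c ^ n * s ^ n - c ^ n * INR n * p * s ^ S n) + c ^ n * s ^ n + (c ^ n * INR n * p) * s ^ S n).
    intros; ring. apply bigO_plus. apply bigO_plus. apply (bigO_weaken (S (S n))); auto.
    apply bigO_scal, bigO_pow. apply bigO_scal. apply (bigO_weaken (S n)). lia. apply bigO_pow. }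
  assert (D2O : bigO n d2).
  { apply bigO_ext with (fun s => (d2 s - c ^ S n * s ^ S n) + c ^ S n * s ^ S n).
    intros; ring. apply bigO_plus. apply (bigO_weaken (S (S n))); auto.
    apply bigO_scal. apply (bigO_weaken (S n)). lia. apply bigO_pow. }
  assert (Hid : locally 0 (fun s => gamma s = Psi_inv (d1 s, d2 s))).
  { assert (A : locally 0 (fun s => Psi (gamma (psi_inv (psi s))) = (psi s ^ n + fst (h (psi s)), psi s ^ S n + snd (h (psi s))))).
    { apply (cont_comp_loc psi 0 (fun t => Psi (gamma (psi_inv t)) = (t ^ n + fst (h t), t ^ S n + snd (h t)))).
      apply smooth_ex_derive; auto. rewrite Hp0. exact Hloc. }
    assert (C := curve_cont_loc gamma _ (conj Hg1 Hg2) HI1).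
    generalize (filter_and _ _ A (filter_and _ _ Hi1 C)). apply filter_imp.
    intros s [S1 [S2 S3]]. rewrite S2 in S1. rewrite <- S3. rewrite S1. reflexivity. }
  rewrite HPg in HPis. destruct HPis as [HF1 HF2].
  assert (L1 := lin2_bigO _ 0 0 n d1 d2 ltac:(lia) HF1 D1O D2O).
  assert (L2 := lin2_bigO _ 0 0 n d1 d2 ltac:(lia) HF2 D1O D2O).
  set (J11 := pD true (fun q => fst (Psi_inv q)) (0, 0)) in *.
  set (J12 := pD false (fun q => fst (Psi_inv q)) (0, 0)) in *.
  set (J21 := pD true (fun q => snd (Psi_inv q)) (0, 0)) in *.
  set (J22 := pD false (fun q => snd (Psi_inv q)) (0, 0)) in *.
  set (A1 := J11 * c ^ n). set (B1 := J11 * (c ^ n * INR n * p) + J12 * c ^ S n).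
  set (A2 := J21 * c ^ n). set (B2 := J21 * (c ^ n * INR n * p) + J22 * c ^ S n).
  assert (R1 : forall j, (j <= S n)%nat -> Derive_n (fun s => fst (gamma s)) j 0 = INR (fact j) * T4 gx A1 B1 0 n j).
  { apply taylor_identify; auto.
    apply bigO_ext_locally with (fun s => (fst (Psi_inv (0 + d1 s, 0 + d2 s)) - fst (Psi_inv (0, 0)) - J11 * d1 s - J12 * d2 s)
        + J11 * (d1 s - c ^ n * s ^ n - c ^ n * INR n * p * s ^ S n) + J12 * (d2 s - c ^ S n * s ^ S n)).
    - eapply filter_imp. 2: exact Hid. intros s Hs. rewrite sum_T4_1 by lia. rewrite Hs, HPig, !Rplus_0_l.
      fold gx. unfold A1, B1. ring.
    - apply bigO_plus. apply bigO_plus. apply (bigO_weaken (n + n)). lia. exact L1.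
      apply bigO_scal; auto. apply bigO_scal; auto. }
  assert (R2 : forall j, (j <= S n)%nat -> Derive_n (fun s => snd (gamma s)) j 0 = INR (fact j) * T4 gy A2 B2 0 n j).
  { apply taylor_identify; auto.
    apply bigO_ext_locally with (fun s => (snd (Psi_inv (0 + d1 s, 0 + d2 s)) - snd (Psi_inv (0, 0)) - J21 * d1 s - J22 * d2 s)
        + J21 * (d1 s - c ^ n * s ^ n - c ^ n * INR n * p * s ^ S n) + J22 * (d2 s - c ^ S n * s ^ S n)).
    - eapply filter_imp. 2: exact Hid. intros s Hs. rewrite sum_T4_1 by lia. rewrite Hs, HPig, !Rplus_0_l.
      fold gy. unfold A2, B2. ring.
    - apply bigO_plus. apply bigO_plus. apply (bigO_weaken (n + n)). lia. exact L2.
      apply bigO_scal; auto. apply bigO_scal; auto. }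
  assert (HdetJ : J11 * J22 - J12 * J21 <> 0).
  { rewrite Eg in HPs, HPg, HPig. rewrite Eg in HI1.
    assert (HF : smooth_map2_at (0, 0) Psi_inv) by (split; auto).
    assert (HI1' : locally (0, 0) (fun w => Psi (Psi_inv w) = w)).
    { rewrite <- HPg. rewrite <- Eg. exact HI2. }
    destruct (jac_dir Psi Psi_inv gx gy 0 0 1 0 HPs HF HPg HPig HI1') as [Q1 Q2].
    destruct (jac_dir Psi Psi_inv gx gy 0 0 0 1 HPs HF HPg HPig HI1') as [Q3 Q4].
    cbv zeta in Q1, Q2, Q3, Q4. fold J11 J12 J21 J22 in Q1, Q2, Q3, Q4.
    set (K11 := pD true (fun q => fst (Psi q)) (gx, gy)) in *.
    set (K12 := pD false (fun q => fst (Psi q)) (gx, gy)) in *.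
    set (K21 := pD true (fun q => snd (Psi q)) (gx, gy)) in *.
    set (K22 := pD false (fun q => snd (Psi q)) (gx, gy)) in *.
    intros HJ.
    assert (E : (K11 * K22 - K12 * K21) * (J11 * J22 - J12 * J21) =
      (K11 * (J11 * 1 + J12 * 0) + K12 * (J21 * 1 + J22 * 0)) * (K21 * (J11 * 0 + J12 * 1) + K22 * (J21 * 0 + J22 * 1))
      - (K11 * (J11 * 0 + J12 * 1) + K12 * (J21 * 0 + J22 * 1)) * (K21 * (J11 * 1 + J12 * 0) + K22 * (J21 * 1 + J22 * 0))) by ring.
    rewrite Q1, Q2, Q3, Q4, HJ in E. lra. }
  split.
  - intros k Hk. unfold deriv_vec. rewrite R1 by lia. rewrite R2 by lia.
    rewrite !T4_mid by lia. f_equal; ring.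
  - unfold deriv_vec, det2. cbn [fst snd].
    rewrite (R1 n), (R2 n), (R1 (S n)), (R2 (S n)) by lia. rewrite !T4_n by lia. rewrite !T4_Sn.
    unfold A1, B1, A2, B2.
    replace (INR (fact n) * (J11 * c ^ n) * (INR (fact (S n)) * (J21 * (c ^ n * INR n * p) + J22 * c ^ S n)) -
             INR (fact n) * (J21 * c ^ n) * (INR (fact (S n)) * (J11 * (c ^ n * INR n * p) + J12 * c ^ S n)))
      with (INR (fact n) * INR (fact (S n)) * (c ^ n * c ^ S n) * (J11 * J22 - J12 * J21)) by ring.
    repeat apply Rmult_integral_contrapositive_currified; auto; try apply INR_fact_neq_0; apply pow_nonzero; auto.
Qed.


Definition wq (al be s : R) := 1 - al * s - be * s ^ 2.
Definition phif (al be s : R) := s * / wq al be s.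
Definition Aq (al t : R) := 1 + al * t.
Definition Qq (al be t : R) := Aq al t ^ 2 + 4 * be * t ^ 2.
Definition psif (al be t : R) := 2 * t * / (Aq al t + sqrt (Qq al be t)).
Definition rad (al be : R) := / (4 * (1 + Rabs al + Rabs be)).


Lemma rad_facts (al be : R) : 0 < rad al be /\ rad al be <= 1/4 /\ Rabs al * rad al be <= 1/4 /\ Rabs be * rad al be <= 1/4.
Proof.
  unfold rad. assert (0 <= Rabs al) by apply Rabs_pos. assert (0 <= Rabs be) by apply Rabs_pos.
  set (L := 1 + Rabs al + Rabs be). assert (1 <= L) by (unfold L; lra).
  split. apply Rinv_0_lt_compat; lra.
  assert (E : / (4 * L) = (1/4) * / L) by (field; lra).
  assert (0 < / L <= 1). { split. apply Rinv_0_lt_compat; lra. rewrite <- Rinv_1. apply Rinv_le_contravar; lra. }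
  assert (Rabs al * / L <= 1). { apply Rmult_le_reg_r with L. lra. rewrite Rmult_assoc, Rinv_l by lra. unfold L; lra. }
  assert (Rabs be * / L <= 1). { apply Rmult_le_reg_r with L. lra. rewrite Rmult_assoc, Rinv_l by lra. unfold L; lra. }
  rewrite E. split. lra. split; nra.
Qed.

Lemma abs_small (x y r : R) : Rabs x * r <= 1/4 -> Rabs y < r -> Rabs (x * y) <= 1/4.
Proof.
  intros H1 H2. rewrite Rabs_mult. apply Rle_trans with (Rabs x * r); auto.
  apply Rmult_le_compat_l. apply Rabs_pos. lra.
Qed.

Lemma wq_bound (al be : R) s : Rabs s < rad al be -> 1/2 < wq al be s /\ wq al be s < 3/2.
Proof.
  intros Hs. destruct (rad_facts al be) as [R0 [R1 [R2 R3]]].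
  assert (H1 := abs_small al s _ R2 Hs).
  assert (H2 : Rabs (be * s ^ 2) <= 1/16).
  { rewrite Rabs_mult, <- RPow_abs. simpl. rewrite Rmult_1_r.
    assert (0 <= Rabs s) by apply Rabs_pos. assert (0 <= Rabs be) by apply Rabs_pos.
    assert (Rabs s * Rabs s <= rad al be * (1/4)) by nra. nra. }
  unfold wq. apply Rabs_le_between in H1. apply Rabs_le_between in H2. lra.
Qed.

Lemma phi_bound (al be : R) s : Rabs s < rad al be -> Rabs (phif al be s) <= 2 * Rabs s.
Proof.
  intros Hs. destruct ((wq_bound al be) s Hs) as [W1 W2]. unfold phif. rewrite Rabs_mult, Rabs_inv, (Rabs_pos_eq (wq _ _ _)) by lra.
  assert (0 < / wq al be s <= 2). { split. apply Rinv_0_lt_compat; lra.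
    replace 2 with (/ (1/2)) by field. apply Rinv_le_contravar; lra. }
  assert (0 <= Rabs s) by apply Rabs_pos. nra.
Qed.

Lemma Aq_bound (al be : R) t : Rabs t < rad al be -> 3/4 <= Aq al t <= 5/4.
Proof.
  intros Ht. destruct (rad_facts al be) as [R0 [R1 [R2 R3]]].
  assert (H1 := abs_small al t _ R2 Ht). apply Rabs_le_between in H1. unfold Aq. lra.
Qed.

Lemma Qq_pos (al be : R) t : Rabs t < rad al be -> 1/4 < Qq al be t.
Proof.
  intros Ht. destruct (rad_facts al be) as [R0 [R1 [R2 R3]]]. destruct ((Aq_bound al be) t Ht).
  assert (H2 : Rabs (be * t ^ 2) <= 1/16).
  { rewrite Rabs_mult, <- RPow_abs. simpl. rewrite Rmult_1_r.
    assert (0 <= Rabs t) by apply Rabs_pos. assert (0 <= Rabs be) by apply Rabs_pos.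
    assert (Rabs t * Rabs t <= rad al be * (1/4)) by nra. nra. }
  apply Rabs_le_between in H2. unfold Qq. simpl. nra.
Qed.

Lemma den_pos (al be : R) t : Rabs t < rad al be -> 3/4 <= Aq al t + sqrt (Qq al be t).
Proof.
  intros Ht. destruct ((Aq_bound al be) t Ht). assert (0 <= sqrt (Qq al be t)) by apply sqrt_pos. lra.
Qed.

Lemma psi_bound (al be : R) t : Rabs t < rad al be -> Rabs (psif al be t) <= 8/3 * Rabs t.
Proof.
  intros Ht. assert (D := (den_pos al be) t Ht). unfold psif.
  rewrite Rabs_mult, Rabs_mult, Rabs_inv, (Rabs_pos_eq (_ + _)) by lra. rewrite Rabs_pos_eq by lra.
  assert (0 < / (Aq al t + sqrt (Qq al be t)) <= 4/3). { split. apply Rinv_0_lt_compat; lra.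
    replace (4/3) with (/ (3/4)) by field. apply Rinv_le_contravar; lra. }
  assert (0 <= Rabs t) by apply Rabs_pos. nra.
Qed.

Lemma psi_eq (al be : R) t : Rabs t < rad al be -> be * t * psif al be t ^ 2 + Aq al t * psif al be t - t = 0.
Proof.
  intros Ht. assert (D := (den_pos al be) t Ht). assert (Q := (Qq_pos al be) t Ht).
  assert (S2 : sqrt (Qq al be t) * sqrt (Qq al be t) = Qq al be t) by (apply sqrt_sqrt; lra).
  unfold psif. set (S := sqrt (Qq al be t)) in *. set (A := Aq al t) in *.
  unfold Qq in S2. fold A in S2.
  apply Rmult_eq_reg_r with ((A + S) ^ 2). 2: { apply pow_nonzero. lra. }
  field_simplify. 2: lra.
  replace (S ^ 2) with (S * S) by ring. rewrite S2. ring.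
Qed.

Lemma phi_psi (al be : R) t : Rabs t < 3 * rad al be / 8 -> phif al be (psif al be t) = t.
Proof.
  intros Ht. destruct (rad_facts al be) as [R0 [R1 [R2 R3]]].
  assert (Ht' : Rabs t < rad al be) by lra.
  assert (Hb := (psi_bound al be) t Ht').
  assert (Hs : Rabs (psif al be t) < rad al be) by lra.
  destruct ((wq_bound al be) _ Hs) as [W1 W2].
  assert (E := (psi_eq al be) t Ht'). unfold phif.
  set (s := psif al be t) in *. unfold wq in *. unfold Aq in E.
  apply Rmult_eq_reg_r with (1 - al * s - be * s ^ 2). 2: lra.
  rewrite Rmult_assoc, Rinv_l by lra. simpl in *. nra.
Qed.

Lemma psi_phi (al be : R) s : Rabs s < rad al be / 8 -> psif al be (phif al be s) = s.
Proof.
  intros Hs. destruct (rad_facts al be) as [R0 [R1 [R2 R3]]].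
  assert (Hs' : Rabs s < rad al be) by lra.
  destruct ((wq_bound al be) _ Hs') as [W1 W2].
  assert (Hp := (phi_bound al be) s Hs'). set (t := phif al be s) in *.
  assert (Ht : Rabs t < rad al be) by lra.
  assert (Hq := (psi_bound al be) t Ht). set (s' := psif al be t) in *.
  assert (E1 := (psi_eq al be) t Ht). fold s' in E1.
  assert (E2 : be * t * s ^ 2 + Aq al t * s - t = 0).
  { unfold t, phif, Aq. unfold wq in *. field_simplify; [|lra]. simpl. field_simplify; lra. }
  assert (F : (s' - s) * (be * t * (s' + s) + Aq al t) = 0) by (simpl in *; nra).
  destruct ((Aq_bound al be) t Ht) as [A1 A2].
  assert (B : Rabs (be * t * (s' + s)) <= 1/8).
  { rewrite Rabs_mult. assert (Rabs (be * t) <= 1/4) by (apply abs_small with (rad al be); auto).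
    assert (Rabs (s' + s) <= 1/2). { eapply Rle_trans. apply Rabs_triang. lra. }
    assert (0 <= Rabs (be * t)) by apply Rabs_pos. assert (0 <= Rabs (s' + s)) by apply Rabs_pos. nra. }
  apply Rabs_le_between in B.
  apply Rmult_integral in F. destruct F as [F|F]. lra. lra.
Qed.

Lemma u_expand (al be : R) : bigO 3 (fun s => / wq al be s - 1 - al * s - (be + al ^ 2) * s ^ 2).
Proof.
  destruct (rad_facts al be) as [R0 [R1 [R2 R3]]].
  apply bigO_ext_loc with (fun s => s ^ 3 * ((2 * al * be + al ^ 3 + be * (be + al ^ 2) * s) * / wq al be s)).
  - exists (rad al be). split; auto. intros t Ht. destruct ((wq_bound al be) t Ht) as [W1 W2].
    unfold wq in *. field. lra.
  - replace 3%nat with (3 + 0)%nat by lia. apply bigO_pow_mul.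
    replace 0%nat with (0 + 0)%nat by lia. apply bigO_mult.
    apply (bigO_weaken 0 0). lia. apply bigO_plus. apply bigO_const. apply bigO_scal. apply (bigO_weaken 1). lia. apply bigO_id1.
    apply bigO_0_bounded. exists 2, (rad al be). split; auto. intros t Ht. destruct ((wq_bound al be) t Ht).
    rewrite Rabs_inv, Rabs_pos_eq by lra. replace 2 with (/ (1/2)) by field. apply Rinv_le_contravar; lra.
Qed.

Lemma u_bounded (al be : R) : bigO 0 (fun s => / wq al be s).
Proof.
  destruct (rad_facts al be) as [R0 [R1 [R2 R3]]].
  apply bigO_0_bounded. exists 2, (rad al be). split; auto. intros t Ht. destruct ((wq_bound al be) t Ht).
  rewrite Rabs_inv, Rabs_pos_eq by lra. replace 2 with (/ (1/2)) by field. apply Rinv_le_contravar; lra.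
Qed.

Lemma phi_O1 (al be : R) : bigO 1 (phif al be).
Proof.
  replace 1%nat with (1 + 0)%nat by lia. unfold phif. apply bigO_mult. apply bigO_id1. apply (u_bounded al be).
Qed.

Lemma openR_abs r : openR (fun x => Rabs x < r).
Proof.
  intros x Hx. exists (r - Rabs x). split. lra. intros y Hy.
  replace y with (x + (y - x)) by ring. eapply Rle_lt_trans. apply Rabs_triang. lra.
Qed.

Lemma Ck_poly2 U k (c0 c1 c2 : R) : openR U -> Ck U k (fun s => c0 + c1 * s + c2 * s ^ 2).
Proof.
  intros HU. apply Ck_plus; auto. apply Ck_plus; auto. apply Ck_const. apply Ck_scal; auto. apply Ck_id.
  apply Ck_scal; auto. apply Ck_pow; auto. apply Ck_id.
Qed.

Lemma phi_Ck (al be : R) k : Ck (fun s => Rabs s < rad al be) k (phif al be).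
Proof.
  assert (HU := openR_abs (rad al be)). unfold phif.
  apply Ck_mult; auto. apply Ck_id.
  apply Ck_comp with (fun x => x <> 0); auto. apply Ck_inv.
  apply Ck_ext with (fun s => 1 + (- al) * s + (- be) * s ^ 2); auto. intros; unfold wq; ring.
  apply Ck_poly2; auto.
  intros x Hx. destruct ((wq_bound al be) x Hx). lra.
Qed.

Lemma psi_Ck (al be : R) k : Ck (fun s => Rabs s < rad al be) k (psif al be).
Proof.
  assert (HU := openR_abs (rad al be)). unfold psif.
  apply Ck_mult; auto. apply Ck_scal; auto. apply Ck_id.
  apply Ck_comp with (fun x => x <> 0); auto. apply Ck_inv.
  apply Ck_plus; auto. unfold Aq. apply Ck_plus; auto. apply Ck_const. apply Ck_scal; auto. apply Ck_id.
  apply Ck_comp with (fun x => 0 < x); auto. apply Ck_sqrt.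
  apply Ck_ext with (fun s => 1 + (2 * al) * s + (al ^ 2 + 4 * be) * s ^ 2); auto. intros; unfold Qq, Aq; ring.
  apply Ck_poly2; auto.
  intros x Hx. assert (Q := (Qq_pos al be) x Hx). lra.
  intros x Hx. assert (D := (den_pos al be) x Hx). lra.
Qed.


Lemma Ck_smooth1 U x0 f : openR U -> U x0 -> (forall k, Ck U k f) -> smooth1_at x0 f.
Proof.
  intros HU Hx H. unfold smooth1_at. apply filter_imp with U. 2: now apply openR_locally.
  intros x Hux n. apply (H (S n) x Hux n). lia.
Qed.


Definition aff (c1 c2 c0 : R) (q : R * R) := c1 * fst q + c2 * snd q + c0.

Lemma iterD_ext w (f g : R * R -> R) : (forall q, f q = g q) -> forall q, iterD w f q = iterD w g q.
Proof.
  induction w as [|b w IH]; intros H q. simpl; auto.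
  simpl. unfold pD. destruct b; apply Derive_ext; intros t; apply IH; auto.
Qed.

Lemma iterD_aff w : forall c1 c2 c0, exists d1 d2 d0, forall q, iterD w (aff c1 c2 c0) q = aff d1 d2 d0 q.
Proof.
  induction w as [|b w IH]; intros c1 c2 c0.
  - exists c1, c2, c0. reflexivity.
  - destruct (IH c1 c2 c0) as [d1 [d2 [d0 H]]].
    destruct b.
    + exists 0, 0, d1. intros q. simpl. unfold pD.
      rewrite (Derive_ext _ (fun t => d1 * t + (d2 * snd q + d0))).
      * apply is_derive_unique. auto_derive. auto. unfold aff. ring.
      * intros t. rewrite H. unfold aff. simpl. ring.
    + exists 0, 0, d2. intros q. simpl. unfold pD.
      rewrite (Derive_ext _ (fun t => d2 * t + (d1 * fst q + d0))).
      * apply is_derive_unique. auto_derive. auto. unfold aff. ring.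
      * intros t. rewrite H. unfold aff. simpl. ring.
Qed.

Lemma cont_aff d1 d2 d0 q : continuous (aff d1 d2 d0) q.
Proof.
  unfold continuous. apply filterlim_locally. intros eps. destruct q as [x0 y0].
  assert (0 <= Rabs d1) by apply Rabs_pos. assert (0 <= Rabs d2) by apply Rabs_pos.
  assert (He : 0 < eps / (Rabs d1 + Rabs d2 + 1)) by (apply Rdiv_lt_0_compat; [apply cond_pos|lra]).
  apply box_locally2 with (eps / (Rabs d1 + Rabs d2 + 1)); auto.
  intros x y Hx Hy. change (Rabs (aff d1 d2 d0 (x, y) - aff d1 d2 d0 (x0, y0)) < eps).
  unfold aff. simpl. replace (d1 * x + d2 * y + d0 - (d1 * x0 + d2 * y0 + d0)) with (d1 * (x - x0) + d2 * (y - y0)) by ring.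
  eapply Rle_lt_trans. apply Rabs_triang. rewrite !Rabs_mult.
  set (e := eps / (Rabs d1 + Rabs d2 + 1)) in *.
  assert (E : e * (Rabs d1 + Rabs d2 + 1) = eps) by (unfold e; field; lra).
  assert (Rabs (x - x0) * Rabs d1 <= e * Rabs d1) by (apply Rmult_le_compat_r; lra).
  assert (Rabs (y - y0) * Rabs d2 <= e * Rabs d2) by (apply Rmult_le_compat_r; lra).
  nra.
Qed.

Lemma smooth2_aff p c1 c2 c0 : smooth2_at p (aff c1 c2 c0).
Proof.
  unfold smooth2_at. apply filter_forall. intros q w.
  destruct (iterD_aff w c1 c2 c0) as [d1 [d2 [d0 H]]]. split.
  - apply continuous_ext with (aff d1 d2 d0). intros; rewrite H; auto. apply cont_aff.
  - split.
    + apply ex_derive_ext with (fun t => d1 * t + (d2 * snd q + d0)). intros t; rewrite H; unfold aff; simpl; ring.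
      auto_derive. auto.
    + apply ex_derive_ext with (fun t => d2 * t + (d1 * fst q + d0)). intros t; rewrite H; unfold aff; simpl; ring.
      auto_derive. auto.
Qed.

Lemma smooth2_ext p (f g : R * R -> R) : (forall q, f q = g q) -> smooth2_at p f -> smooth2_at p g.
Proof.
  intros H. replace g with f. auto. apply functional_extensionality; auto.
Qed.


Lemma Ck_sub U V k f : (forall x, U x -> V x) -> Ck V k f -> Ck U k f.
Proof. intros HUV H x Hx j Hj. apply H; auto. Qed.

Lemma openR_int a b : openR (fun x => a < x < b).
Proof.
  intros x Hx. exists (Rmin (x - a) (b - x)). split. apply Rmin_pos; lra.
  intros y Hy. assert (H1 := Rmin_l (x - a) (b - x)). assert (H2 := Rmin_r (x - a) (b - x)).
  apply Rabs_def2 in Hy. lra.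
Qed.

Lemma Ck_of_smooth a b f : (forall x, a < x < b -> smooth1_at x f) -> forall k, Ck (fun x => a < x < b) k f.
Proof.
  intros H k x Hx j Hj. specialize (H x Hx). apply locally_singleton in H. apply H.
Qed.

Lemma taylor_T4 (g : R -> R) n : (2 <= n)%nat -> smooth1_at 0 g ->
  (forall k, (1 <= k <= n - 1)%nat -> Derive_n g k 0 = 0) ->
  bigO (S (S (S n))) (fun t => g t - (g 0 + Derive_n g n 0 / INR (fact n) * t ^ n
      + Derive_n g (S n) 0 / INR (fact (S n)) * t ^ S n + Derive_n g (S (S n)) 0 / INR (fact (S (S n))) * t ^ S (S n))).
Proof.
  intros Hn Hs Hz. eapply bigO_ext. 2: apply (taylor_bigO g (S (S n)) Hs).
  intros t. unfold taylor.
  rewrite <- (sum_T4_2 (g 0) (Derive_n g n 0 / INR (fact n)) (Derive_n g (S n) 0 / INR (fact (S n)))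
    (Derive_n g (S (S n)) 0 / INR (fact (S (S n)))) n t) by lia.
  f_equal. apply sum_eq. intros j Hj. f_equal.
  destruct (Nat.eq_dec j 0) as [->|H0].
  { unfold T4. simpl. field. }
  destruct (Compare_dec.lt_dec j n) as [Hl|Hl].
  { rewrite T4_mid by lia. rewrite Hz by lia. unfold Rdiv; ring. }
  destruct (Nat.eq_dec j n) as [->|H1]. { rewrite T4_n by lia. reflexivity. }
  destruct (Nat.eq_dec j (S n)) as [->|H2]. { rewrite T4_Sn. reflexivity. }
  assert (j = S (S n)) by lia. subst j. rewrite T4_SSn. reflexivity.
Qed.

Lemma forward (n : nat) (a b : R) (gamma : R -> R * R) :
  (2 <= n)%nat -> a < 0 < b -> (forall x, a < x < b -> smooth_curve_at x gamma) ->
  (forall k, (1 <= k <= n - 1)%nat -> deriv_vec gamma k 0 = (0, 0)) ->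
  det2 (deriv_vec gamma n 0) (deriv_vec gamma (S n) 0) <> 0 ->
  exists h : R -> R * R, smooth_curve_at 0 h /\ (forall k, (k <= n + 2)%nat -> deriv_vec h k 0 = (0, 0)) /\
    A_equiv_at0 gamma (fun t => (t ^ n + fst (h t), t ^ (S n) + snd (h t))).
Proof.
  intros Hn Hab Hsm Hz Hdet.
  set (g1 := fun s => fst (gamma s)). set (g2 := fun s => snd (gamma s)).
  assert (HC1 : forall k, Ck (fun x => a < x < b) k g1).
  { apply Ck_of_smooth. intros x Hx. apply (Hsm x Hx). }
  assert (HC2 : forall k, Ck (fun x => a < x < b) k g2).
  { apply Ck_of_smooth. intros x Hx. apply (Hsm x Hx). }
  destruct (Hsm 0 Hab) as [Hs1 Hs2].
  assert (Hz1 : forall k, (1 <= k <= n - 1)%nat -> Derive_n g1 k 0 = 0).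
  { intros k Hk. specialize (Hz k Hk). unfold deriv_vec in Hz. injection Hz. auto. }
  assert (Hz2 : forall k, (1 <= k <= n - 1)%nat -> Derive_n g2 k 0 = 0).
  { intros k Hk. specialize (Hz k Hk). unfold deriv_vec in Hz. injection Hz. auto. }
  assert (E1 := taylor_T4 g1 n Hn Hs1 Hz1). assert (E2 := taylor_T4 g2 n Hn Hs2 Hz2).
  set (A1 := Derive_n g1 n 0 / INR (fact n)) in *.
  set (B1 := Derive_n g1 (S n) 0 / INR (fact (S n))) in *.
  set (C1 := Derive_n g1 (S (S n)) 0 / INR (fact (S (S n)))) in *.
  set (A2 := Derive_n g2 n 0 / INR (fact n)) in *.
  set (B2 := Derive_n g2 (S n) 0 / INR (fact (S n))) in *.
  set (C2 := Derive_n g2 (S (S n)) 0 / INR (fact (S (S n)))) in *.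
  set (g10 := g1 0) in *. set (g20 := g2 0) in *.
  set (D := A1 * B2 - A2 * B1).
  assert (HD : D <> 0).
  { intros HD. apply Hdet. unfold det2, deriv_vec. cbn [fst snd].
    assert (F1 := INR_fact_neq_0 n). assert (F2 := INR_fact_neq_0 (S n)).
    replace (Derive_n (fun s => fst (gamma s)) n 0 * Derive_n (fun s => snd (gamma s)) (S n) 0 -
             Derive_n (fun s => snd (gamma s)) n 0 * Derive_n (fun s => fst (gamma s)) (S n) 0)
      with (INR (fact n) * INR (fact (S n)) * D). rewrite HD; ring.
    unfold D, A1, A2, B1, B2, g1, g2. field. auto. }
  set (N := INR n).
  assert (HN : N <> 0) by (unfold N; apply not_0_INR; lia).
  assert (HSN : INR (S n) <> 0) by (apply not_0_INR; lia).
  set (c2' := (A1 * C2 - A2 * C1) / D). set (c1' := (C1 * B2 - C2 * B1) / D).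
  set (al := - c2' / INR (S n)).
  set (ka := - (c1' + N * (N - 1) / 2 * al ^ 2) / N).
  set (be := ka - al ^ 2).
  set (Bp1 := N * al * A1 + B1). set (Bp2 := N * al * A2 + B2).
  assert (K1 : Qc n al ka * A1 + INR (S n) * al * B1 + C1 = 0).
  { unfold Qc. fold N. unfold ka, al, c1', c2'. unfold D in *. field. repeat split; auto. }
  assert (K2 : Qc n al ka * A2 + INR (S n) * al * B2 + C2 = 0).
  { unfold Qc. fold N. unfold ka, al, c1', c2'. unfold D in *. field. repeat split; auto. }
  set (phi := phif al be). set (psi := psif al be). set (u := fun s => / wq al be s).
  assert (Hu : bigO 3 (fun s => u s - 1 - al * s - ka * s ^ 2)).
  { eapply bigO_ext. 2: apply (u_expand al be). intros s. unfold u, be. ring. }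
  assert (U0 := upow3 u al ka Hu n). assert (U1 := upow3 u al ka Hu (S n)). assert (U2 := upow3 u al ka Hu (S (S n))).
  assert (V1 : bigO 2 (fun s => u s ^ S n - 1 - INR (S n) * al * s)).
  { apply bigO_ext with (fun s => (u s ^ S n - 1 - INR (S n) * al * s - Qc (S n) al ka * s ^ 2) + Qc (S n) al ka * s ^ 2).
    intros; ring. apply bigO_plus. apply (bigO_weaken 3 2). lia. exact U1. apply bigO_scal, bigO_pow. }
  assert (V2 : bigO 1 (fun s => u s ^ S (S n) - 1)).
  { apply bigO_ext with (fun s => (u s ^ S (S n) - 1 - INR (S (S n)) * al * s - Qc (S (S n)) al ka * s ^ 2)
       + INR (S (S n)) * al * s + Qc (S (S n)) al ka * s ^ 2).
    intros; ring. apply bigO_plus. apply bigO_plus. apply (bigO_weaken 3 1). lia. exact U2.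
    apply bigO_scal, bigO_id1. apply bigO_scal. apply (bigO_weaken 2 1). lia. apply bigO_pow. }
  assert (PhiO := phi_O1 al be). fold phi in PhiO.
  assert (Herr : forall (g : R -> R) g0 A B C, A * Qc n al ka + 0 = A * Qc n al ka ->
     Qc n al ka * A + INR (S n) * al * B + C = 0 ->
     bigO (S (S (S n))) (fun t => g t - (g0 + A * t ^ n + B * t ^ S n + C * t ^ S (S n))) ->
     bigO (S (S (S n))) (fun s => g (phi s) - g0 - A * s ^ n - (N * al * A + B) * s ^ S n)).
  { intros g g0 A B C _ HK HE.
    apply bigO_ext with (fun s => A * (s ^ n * (u s ^ n - 1 - INR n * al * s - Qc n al ka * s ^ 2))
       + B * (s ^ S n * (u s ^ S n - 1 - INR (S n) * al * s))
       + C * (s ^ S (S n) * (u s ^ S (S n) - 1))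
       + (g (phi s) - (g0 + A * phi s ^ n + B * phi s ^ S n + C * phi s ^ S (S n)))
       + (Qc n al ka * A + INR (S n) * al * B + C) * s ^ S (S n)).
    - intros s. unfold phi at 2 3 4. unfold phif. fold (u s). rewrite !Rpow_mult_distr.
      unfold N. rewrite S_INR. cbn [pow]. ring.
    - rewrite HK. apply bigO_plus. apply bigO_plus. apply bigO_plus. apply bigO_plus.
      + apply bigO_scal. replace (S (S (S n))) with (n + 3)%nat by lia. apply bigO_pow_mul. exact U0.
      + apply bigO_scal. replace (S (S (S n))) with (S n + 2)%nat by lia. apply bigO_pow_mul. exact V1.
      + apply bigO_scal. replace (S (S (S n))) with (S (S n) + 1)%nat by lia. apply bigO_pow_mul. exact V2.
      + apply (bigO_comp _ (fun t => g t - (g0 + A * t ^ n + B * t ^ S n + C * t ^ S (S n))) phi); auto.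
      + apply bigO_ext with (fun _ => 0). intros; ring. apply bigO_zero. }
  assert (Err1 := Herr g1 g10 A1 B1 C1 ltac:(ring) K1 E1). fold Bp1 in Err1.
  assert (Err2 := Herr g2 g20 A2 B2 C2 ltac:(ring) K2 E2). fold Bp2 in Err2.
  set (Psi := fun q : R * R => ((Bp2 * (fst q - g10) - Bp1 * (snd q - g20)) / D,
                                (- A2 * (fst q - g10) + A1 * (snd q - g20)) / D)).
  set (Psi_inv := fun w : R * R => (g10 + A1 * fst w + Bp1 * snd w, g20 + A2 * fst w + Bp2 * snd w)).
  assert (HDB : A1 * Bp2 - A2 * Bp1 = D) by (unfold Bp1, Bp2, D; ring).
  set (H1 := fun s => fst (Psi (gamma (phi s))) - s ^ n).
  set (H2 := fun s => snd (Psi (gamma (phi s))) - s ^ S n).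
  assert (H1O : bigO (S (S (S n))) H1).
  { apply bigO_ext with (fun s => (Bp2 / D) * (g1 (phi s) - g10 - A1 * s ^ n - Bp1 * s ^ S n)
        + (- Bp1 / D) * (g2 (phi s) - g20 - A2 * s ^ n - Bp2 * s ^ S n)).
    - intros s. unfold H1, Psi. cbn [fst snd]. fold (g1 (phi s)) (g2 (phi s)).
      apply Rminus_diag_uniq. rewrite <- HDB. field. rewrite HDB; auto.
    - apply bigO_plus; apply bigO_scal; auto. }
  assert (H2O : bigO (S (S (S n))) H2).
  { apply bigO_ext with (fun s => (- A2 / D) * (g1 (phi s) - g10 - A1 * s ^ n - Bp1 * s ^ S n)
        + (A1 / D) * (g2 (phi s) - g20 - A2 * s ^ n - Bp2 * s ^ S n)).
    - intros s. unfold H2, Psi. cbn [fst snd]. fold (g1 (phi s)) (g2 (phi s)).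
      apply Rminus_diag_uniq. rewrite <- HDB. field. rewrite HDB; auto.
    - apply bigO_plus; apply bigO_scal; auto. }
  destruct (rad_facts al be) as [R0 [R1 [R2 R3]]].
  set (r2 := Rmin (rad al be / 8) (Rmin (- a) b / 2)).
  assert (Hr2 : 0 < r2). { unfold r2. apply Rmin_pos. lra. apply Rdiv_lt_0_compat. apply Rmin_pos; lra. lra. }
  assert (Hr2a : r2 <= rad al be / 8) by apply Rmin_l.
  assert (Hr2b : r2 <= Rmin (- a) b / 2) by apply Rmin_r.
  assert (Hmn1 := Rmin_l (- a) b). assert (Hmn2 := Rmin_r (- a) b).
  set (U := fun s => Rabs s < r2).
  assert (HU : openR U) by apply openR_abs.
  assert (HUr : forall s, U s -> Rabs s < rad al be) by (unfold U; intros; lra).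
  assert (Hphi_in : forall s, U s -> a < phi s < b).
  { intros s Hs. assert (Hb := phi_bound al be s (HUr s Hs)). fold phi in Hb. unfold U in Hs.
    apply Rabs_le_between in Hb. lra. }
  assert (CP : forall k, Ck U k phi) by (intros k; apply Ck_sub with (fun s => Rabs s < rad al be); auto; apply phi_Ck).
  assert (CH1 : forall k, Ck U k H1).
  { intros k. apply Ck_ext with (fun s => (Bp2 / D) * g1 (phi s) + ((- Bp1 / D) * g2 (phi s) +
        ((- Bp2 * g10 + Bp1 * g20) / D - s ^ n))); auto.
    intros s _. unfold H1, Psi. cbn [fst snd]. fold (g1 (phi s)) (g2 (phi s)). field. auto.
    apply Ck_plus; auto. apply Ck_scal; auto. apply Ck_comp with (fun x => a < x < b); auto.
    apply Ck_plus; auto. apply Ck_scal; auto. apply Ck_comp with (fun x => a < x < b); auto.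
    apply Ck_minus; auto. apply Ck_const. apply Ck_pow; auto. apply Ck_id. }
  assert (CH2 : forall k, Ck U k H2).
  { intros k. apply Ck_ext with (fun s => (- A2 / D) * g1 (phi s) + ((A1 / D) * g2 (phi s) +
        ((A2 * g10 - A1 * g20) / D - s ^ S n))); auto.
    intros s _. unfold H2, Psi. cbn [fst snd]. fold (g1 (phi s)) (g2 (phi s)). field. auto.
    apply Ck_plus; auto. apply Ck_scal; auto. apply Ck_comp with (fun x => a < x < b); auto.
    apply Ck_plus; auto. apply Ck_scal; auto. apply Ck_comp with (fun x => a < x < b); auto.
    apply Ck_minus; auto. apply Ck_const. apply Ck_pow; auto. apply Ck_id. }
  assert (U0' : U 0) by (unfold U; rewrite Rabs_R0; auto).
  assert (SH1 : smooth1_at 0 H1) by (apply Ck_smooth1 with U; auto).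
  assert (SH2 : smooth1_at 0 H2) by (apply Ck_smooth1 with U; auto).
  exists (fun s => (H1 s, H2 s)). split; [|split].
  - split; assumption.
  - intros k Hk. unfold deriv_vec. cbn [fst snd].
    assert (Z1 := taylor_identify H1 (S (S n)) (fun _ => 0) SH1).
    assert (Z2 := taylor_identify H2 (S (S n)) (fun _ => 0) SH2).
    rewrite Z1, Z2; try lia. f_equal; ring.
    + eapply bigO_ext. 2: exact H2O. intros s. rewrite sum_zero_fun; auto. ring.
    + eapply bigO_ext. 2: exact H1O. intros s. rewrite sum_zero_fun; auto. ring.
  - exists psi, phi, Psi, Psi_inv.
    assert (Hpsi0 : psi 0 = 0) by (unfold psi, psif; ring).
    split; [|split; [|split]].
    + split; [|split; [|split]].
      * apply Ck_smooth1 with (fun s => Rabs s < rad al be). apply openR_abs. rewrite Rabs_R0; auto.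
        intros k; apply psi_Ck.
      * rewrite Hpsi0. apply Ck_smooth1 with (fun s => Rabs s < rad al be). apply openR_abs. rewrite Rabs_R0; auto.
        intros k; apply phi_Ck.
      * apply locally_abs with (3 * rad al be / 8). lra. intros t Ht. rewrite Rminus_0_r in Ht.
        apply phi_psi; auto.
      * rewrite Hpsi0. apply locally_abs with (rad al be / 8). lra. intros t Ht. rewrite Rminus_0_r in Ht.
        apply psi_phi; auto.
    + exact Hpsi0.
    + split; [|split; [|split]].
      * split.
        -- apply smooth2_ext with (aff (Bp2 / D) (- Bp1 / D) ((- Bp2 * g10 + Bp1 * g20) / D)).
           intros q. unfold aff, Psi. cbn [fst snd]. field. auto. apply smooth2_aff.
        -- apply smooth2_ext with (aff (- A2 / D) (A1 / D) ((A2 * g10 - A1 * g20) / D)).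
           intros q. unfold aff, Psi. cbn [fst snd]. field. auto. apply smooth2_aff.
      * split.
        -- apply smooth2_ext with (aff A1 Bp1 g10). intros q. unfold aff, Psi_inv. cbn [fst snd]. ring.
           apply smooth2_aff.
        -- apply smooth2_ext with (aff A2 Bp2 g20). intros q. unfold aff, Psi_inv. cbn [fst snd]. ring.
           apply smooth2_aff.
      * apply filter_forall. intros [x y]. unfold Psi_inv, Psi. cbn [fst snd]. apply injective_projections; cbn [fst snd].
        -- apply Rminus_diag_uniq. rewrite <- HDB. field. rewrite HDB; auto.
        -- apply Rminus_diag_uniq. rewrite <- HDB. field. rewrite HDB; auto.
      * apply filter_forall. intros [x y]. unfold Psi_inv, Psi. cbn [fst snd]. apply injective_projections; cbn [fst snd].
        -- apply Rminus_diag_uniq. rewrite <- HDB. field. rewrite HDB; auto.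
        -- apply Rminus_diag_uniq. rewrite <- HDB. field. rewrite HDB; auto.
    + apply filter_forall. intros t. cbn [fst snd]. unfold H1, H2.
      rewrite (surjective_pairing (Psi (gamma (phi t)))) at 1. f_equal; ring.
Qed.


Theorem mainTheorem6 (n : nat) (a b : R) (gamma : R -> R * R) :
  (2 <= n)%nat -> a < 0 < b ->
  (forall x, a < x < b -> smooth_curve_at x gamma) ->
  ((forall k : nat, (1 <= k <= n - 1)%nat -> deriv_vec gamma k 0 = (0, 0)) /\
   det2 (deriv_vec gamma n 0) (deriv_vec gamma (S n) 0) <> 0)
  <->
  (exists h : R -> R * R,
     smooth_curve_at 0 h /\
     (forall k : nat, (k <= n + 2)%nat -> deriv_vec h k 0 = (0, 0)) /\
     A_equiv_at0 gamma (fun t => (t ^ n + fst (h t), t ^ (S n) + snd (h t)))).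
Proof.
  intros Hn Hab Hsm. split.
  - intros [Hz Hdet]. apply forward with a b; auto.
  - intros [h [Hh [Hhd HA]]]. apply backward with h; auto.
Qed.
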